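(* Under the hypotheses of the decomposability theorem for sums (so $S_{(0)}=S_{(1)}+S_{(2)}$ is spectrally decomposable over $S_{(1)}$ with $\kappa=1$ and length $\ell$), one has $A_{0,1}(s)=0$ and $$A_{0,0}(s)=\sum_{n_1=1}^\infty\Big(-\log\Gamma(\lambda_{(1),n_1},S_{(2)})+\sum_{j=0}^{p_{(2)}}a_{(2),j,1}\lambda_{(1),n_1}^j\log\lambda_{(1),n_1}+\sum_{h=0}^\ell a_{(2),\alpha_{(2),h},0}\lambda_{(1),n_1}^{\alpha_{(2),h}}\Big)\lambda_{(1),n_1}^{-s}.$$
   Context: Gamma function of a sequence $S=\{\lambda_n\}$ of genus $\mathsf g(S)$: $\frac1{\Gamma(z,S)}=\prod_n(1+\frac z{\lambda_n})\exp(\sum_{j=1}^{\mathsf g(S)}\frac{(-1)^j}{j}\frac{z^j}{\lambda_n^j})$; $\log(-\lambda)$ is real on the negative real axis. Let $S_{(1)}$ (positive reals) and $S_{(2)}$ be totally regular sequences of spectral type with exponents $s_{(i)}$, genera $p_{(i)}$, orders $\alpha_{(i),N_{(i)}}\le0$, $\alpha_{(1),N_{(1)}}<-p_{(2)}-1$, $-\alpha_{(2),N_{(2)}}\ge s_{(1)}$, with $\log\Gamma(-\lambda,S_{(2)})=\sum_{h}a_{(2),\alpha_{(2),h},0}(-\lambda)^{\alpha_{(2),h}}+\sum_{j=0}^{p_{(2)}}a_{(2),j,1}(-\lambda)^j\log(-\lambda)+o(\cdot)$ as $\lambda\to\infty$ (totally regular: log terms only at integer $j\in[0,p_{(2)}]$).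 Let $\ell$ be the largest integer with $-\alpha_{(2),\ell}\le s_{(1)}$. For $\tilde S_{n_1}=\lambda_{(1),n_1}^{-1}\{\lambda_{(1),n_1}+\lambda_{(2),n_2}\}_{n_2}$ one has, as $n_1\to\infty$ uniformly in $\lambda$, $\log\Gamma(-\lambda,\tilde S_{n_1})=\sum_{h=0}^{\ell}\tilde\phi_{h}(\lambda)\lambda_{(1),n_1}^{\alpha_{(2),h}}+\sum_{l=0}^{p_{(2)}}\hat\phi_{l}(\lambda)\lambda_{(1),n_1}^{l}+\sum_{l=0}^{p_{(2)}}P_l(\lambda)\lambda_{(1),n_1}^l\log\lambda_{(1),n_1}+o(\lambda_{(1),n_1}^{-s_{(1)}})$ with $\tilde\phi_h(\lambda)=a_{(2),\alpha_{(2),h},0}((1-\lambda)^{\alpha_{(2),h}}-1)-\sum_{k=1}^{p_{(0)}}K_{k,h,0}(-\lambda)^k$, $\hat\phi_l(\lambda)=a_{(2),l,1}(1-\lambda)^l\log(1-\lambda)-\sum_{k=1}^{p_{(0)}}K_{k,l,2}(-\lambda)^k$, $P_l$ polynomials vanishing at $0$, $K$'s constants, $p_{(0)}=[s_{(1)}+s_{(2)}]$; these $\tilde\phi_h,\hat\phi_l$ are the functions $\phi_\sigma$ of the decomposition (with $\sigma=-\alpha_{(2),h}$, resp. $\sigma=-l$). Writing $a_{0,k,n_1}$ for the coefficient of $(-\lambda)^0\log^k(-\lambda)$ in the large-$\lambda$ expansion of $\log\Gamma(-\lambda,\tilde S_{n_1})$ and $b_{\sigma,0,k}$ for that of $(-\lambda)^0\log^k(-\lambda)$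 in the large-$\lambda$ expansion of $\phi_\sigma$, define $A_{0,k}(s)=\sum_{n_1\ge1}\big(a_{0,k,n_1}-\sum_\sigma b_{\sigma,0,k}\lambda_{(1),n_1}^{-\sigma}\big)\lambda_{(1),n_1}^{-s}$, $k=0,1$, the sum over $\sigma$ running over all the functions $\phi_\sigma$ above. *)

(* Defs.v *)
From Stdlib Require Import Reals Lra ClassicalEpsilon.
From Coquelicot Require Import Coquelicot.
Open Scope R_scope.

(* principal argument, with values in (-PI, PI]; Carg 0 = 0 *)
Definition Carg (z : C) : R :=
  let x := fst z in let y := snd z in
  match Rlt_dec 0 x with
  | left _ => atan (y / x)
  | right _ =>
    match Rlt_dec x 0 with
    | left _ => match Rle_dec 0 y with
                | left _ => atan (y / x) + PI
                | right _ => atan (y / x) - PI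
                end
    | right _ =>
      match Rlt_dec 0 y with
      | left _ => PI / 2
      | right _ => match Rlt_dec y 0 with
                   | left _ => - (PI / 2)
                   | right _ => 0
                   end
      end
    end
  end.

Definition Cexp (z : C) : C := (exp (fst z) * cos (snd z), exp (fst z) * sin (snd z)).

Definition Clog (z : C) : C := (ln (Cmod z), Carg z).

Definition Cpow (z : C) (a : R) : C := Cexp (RtoC a * Clog z)%C.

Fixpoint cpown (z : C) (n : nat) : C :=
  match n with O => RtoC 1 | S m => (z * cpown z m)%C end.

(* x^z for x > 0 real and z complex *)
Definition Rpow_C (x : R) (z : C) : C := Cexp (z * RtoC (ln x))%C.

Fixpoint csum (f : nat -> C) (n : nat) : C :=
  match n with O => RtoC 0 | S m => (csum f m + f m)%C end.

(* sum of a complex series (real and imaginary parts separately; the usual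
   total "junk value" convention of Coquelicot's Series if divergent) *)
Definition CSeries (u : nat -> C) : C :=
  (Series (fun n => fst (u n)), Series (fun n => snd (u n))).

Definition is_conv_exp (Sq : nat -> C) (s : R) : Prop :=
  (forall t, s < t -> ex_series (fun n => Rpower (Cmod (Sq n)) (- t))) /\
  (forall t, t < s -> ~ ex_series (fun n => Rpower (Cmod (Sq n)) (- t))).

Definition is_genus (Sq : nat -> C) (p : nat) : Prop :=
  ex_series (fun n => / (Cmod (Sq n)) ^ (S p)) /\
  (forall q, (q < p)%nat -> ~ ex_series (fun n => / (Cmod (Sq n)) ^ (S q))).

Definition genus (Sq : nat -> C) : nat :=
  epsilon (inhabits O) (fun p => is_genus Sq p).

Definition logGamma (z : C) (Sq : nat -> C) : C :=
  (- CSeries (fun n =>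
       Clog (RtoC 1 + z / Sq n) +
       csum (fun j => RtoC ((-1) ^ (S j) / INR (S j)) * cpown (z / Sq n) (S j))
            (genus Sq)))%C.

Definition in_sector (theta c : R) (z : C) : Prop :=
  Rabs (Carg (z - RtoC c)%C) <= theta / 2.

(* Totally regular sequence of spectral type, with exponent s, genus p,
   expansion exponents alpha_0 > ... > alpha_N (order alpha_N), coefficients
   a0 h = a_{alpha_h,0} and a1 j = a_{j,1} (j = 0..p):
   log Gamma(-lam,S) = sum_{h<=N} a0 h (-lam)^{alpha_h}
                       + sum_{j<=p} a1 j (-lam)^j log(-lam) + o(|lam|^{alpha_N})
   uniformly for large lam outside the sector. *)
Definition TR_spectral_type (Sq : nat -> C) (s : R) (p : nat) (N : nat)
    (alpha : nat -> R) (a0 a1 : nat -> C) : Prop :=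
  (forall n, Sq n <> RtoC 0) /\
  (forall n, Cmod (Sq n) <= Cmod (Sq (Datatypes.S n))) /\
  is_conv_exp Sq s /\ is_genus Sq p /\
  (forall i j, (i < j <= N)%nat -> alpha j < alpha i) /\
  exists theta c, 0 < theta < PI /\ 0 < c /\
    (forall n, in_sector theta c (Sq n)) /\
    forall eps, 0 < eps -> exists R0, forall lam : C,
      ~ in_sector theta c lam -> R0 < Cmod lam ->
      Cmod (logGamma (- lam)%C Sq
            - csum (fun h => a0 h * Cpow (- lam)%C (alpha h)) (Datatypes.S N)
            - csum (fun j => a1 j * cpown (- lam)%C j * Clog (- lam)%C) (Datatypes.S p))%C
        <= eps * Rpower (Cmod lam) (alpha N).

(* f(lam) = sum of terms (d0 + d1 log(-lam)) (-lam)^beta with beta > 0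
            + c1 log(-lam) + c0 + o(1)  as lam -> oo
   (tested along lam = -x, x -> +oo, where -lam = x and log(-lam) = ln x;
   these constant coefficients are uniquely determined). *)
Definition const_log_coeffs (f : C -> C) (c0 c1 : C) : Prop :=
  exists L : list (R * C * C),
    List.Forall (fun t => 0 < fst (fst t)) L /\
    is_lim (fun x => Cmod (f (RtoC (- x))
              - List.fold_right
                  (fun t acc => (snd (fst t) + snd t * RtoC (ln x))
                                * RtoC (Rpower x (fst (fst t))) + acc)%C
                  (RtoC 0) L
              - c1 * RtoC (ln x) - c0)%C)
           p_infty 0.

(* coefficient of (-lam)^0 log^k(-lam) (k = 0, 1) in the expansion of f *)
Definition coeff0 (f : C -> C) (k : nat) : C :=
  let c := epsilon (inhabits (RtoC 0, RtoC 0))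
                   (fun c : C * C => const_log_coeffs f (fst c) (snd c)) in
  match k with O => fst c | _ => snd c end.

Definition Stilde (lam1 : nat -> R) (S2 : nat -> C) (n1 : nat) : nat -> C :=
  fun n2 => ((RtoC (lam1 n1) + S2 n2) / RtoC (lam1 n1))%C.

Definition phi_tilde (p0 : nat) (alpha2 : nat -> R) (a20 : nat -> C)
    (K0 : nat -> nat -> C) (h : nat) (lam : C) : C :=
  (a20 h * (Cpow (RtoC 1 - lam) (alpha2 h) - RtoC 1)
   - csum (fun k => K0 (S k) h * cpown (- lam) (S k)) p0)%C.

Definition phi_hat (p0 : nat) (a21 : nat -> C) (K2 : nat -> nat -> C)
    (l : nat) (lam : C) : C :=
  (a21 l * cpown (RtoC 1 - lam) l * Clog (RtoC 1 - lam)
   - csum (fun k => K2 (S k) l * cpown (- lam) (S k)) p0)%C.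

(* A_{0,k}(s) = sum_{n1} ( a_{0,k,n1} - sum_sigma b_{sigma,0,k} lambda_{(1),n1}^{-sigma} )
                         lambda_{(1),n1}^{-s},
   the sigma's being sigma = -alpha_{(2),h} (h = 0..ell, function tilde phi_h)
   and sigma = -l (l = 0..p2, function hat phi_l). *)
Definition A0 (lam1 : nat -> R) (S2 : nat -> C) (p0 p2 ell : nat)
    (alpha2 : nat -> R) (a20 a21 : nat -> C) (K0 K2 : nat -> nat -> C)
    (k : nat) (s : C) : C :=
  CSeries (fun n1 =>
    (coeff0 (fun lam => logGamma (- lam)%C (Stilde lam1 S2 n1)) k
     - csum (fun h => coeff0 (phi_tilde p0 alpha2 a20 K0 h) k
                      * RtoC (Rpower (lam1 n1) (alpha2 h))) (S ell)
     - csum (fun l => coeff0 (phi_hat p0 a21 K2 l) k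
                      * RtoC (lam1 n1 ^ l)) (S p2))
    * Rpow_C (lam1 n1) (- s))%C.

(* Main.v *)
Require Import Defs.
From Stdlib Require Import Reals ZArith.
From Coquelicot Require Import Coquelicot.
From Stdlib Require Import Lra Lia List ClassicalEpsilon.
Open Scope R_scope.

Definition tsum (L : list (R*C*C)) (x : R) : C :=
  List.fold_right (fun t acc => ((snd (fst t) + snd t * RtoC (ln x))
                                * RtoC (Rpower x (fst (fst t))) + acc)%C) (RtoC 0) L.

Definition Small (g : R -> C) : Prop :=
  forall eps, 0 < eps -> exists M, forall x, M < x -> Cmod (g x) < eps.

Definition HasExp (F : R -> C) (c0 c1 : C) : Prop :=
  exists L, List.Forall (fun t => 0 < fst (fst t)) L /\
    Small (fun x => F x - tsum L x - c1 * RtoC (ln x) - c0)%C.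

Lemma Small_iff (g : R -> C) :
  is_lim (fun x => Cmod (g x)) p_infty 0 <-> Small g.
Proof.
  rewrite <- is_lim_spec. unfold is_lim', Small. split.
  - intros H eps Heps. destruct (H (mkposreal eps Heps)) as [M HM].
    exists M. intros x Hx. specialize (HM x Hx). simpl in HM.
    rewrite Rminus_0_r, Rabs_pos_eq in HM by apply Cmod_ge_0. exact HM.
  - intros H eps. destruct (H eps (cond_pos eps)) as [M HM].
    exists M. intros x Hx. rewrite Rminus_0_r, Rabs_pos_eq by apply Cmod_ge_0.
    apply HM; auto.
Qed.

Lemma cl_iff f c0 c1 :
  const_log_coeffs f c0 c1 <-> HasExp (fun x => f (RtoC (- x))) c0 c1.
Proof.
  unfold const_log_coeffs, HasExp. split; intros [L [HL H]]; exists L; split; auto;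
  [apply Small_iff | apply <- Small_iff]; exact H.
Qed.

Lemma Small_ext (g h : R -> C) M0 :
  (forall x, M0 < x -> g x = h x) -> Small g -> Small h.
Proof.
  intros E H eps He. destruct (H eps He) as [M HM]. exists (Rmax M M0).
  intros x Hx. rewrite <- E. apply HM. eapply Rle_lt_trans; [apply Rmax_l|exact Hx].
  eapply Rle_lt_trans; [apply Rmax_r|exact Hx].
Qed.

Lemma Small_le (g h : R -> C) M0 :
  (forall x, M0 < x -> Cmod (h x) <= Cmod (g x)) -> Small g -> Small h.
Proof.
  intros E H eps He. destruct (H eps He) as [M HM]. exists (Rmax M M0).
  intros x Hx. eapply Rle_lt_trans. apply E.
  eapply Rle_lt_trans; [apply Rmax_r|exact Hx]. apply HM.
  eapply Rle_lt_trans; [apply Rmax_l|exact Hx].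
Qed.

Lemma Small_plus g h : Small g -> Small h -> Small (fun x => g x + h x)%C.
Proof.
  intros Hg Hh eps He. destruct (Hg (eps/2)) as [M1 H1]. lra.
  destruct (Hh (eps/2)) as [M2 H2]. lra. exists (Rmax M1 M2). intros x Hx.
  eapply Rle_lt_trans. apply Cmod_triangle.
  assert (Cmod (g x) < eps/2). apply H1. eapply Rle_lt_trans; [apply Rmax_l|exact Hx].
  assert (Cmod (h x) < eps/2). apply H2. eapply Rle_lt_trans; [apply Rmax_r|exact Hx].
  lra.
Qed.

Lemma Small_scal (c : C) g : Small g -> Small (fun x => c * g x)%C.
Proof.
  intros Hg eps He. destruct (Hg (eps / (Cmod c + 1))) as [M HM].
  apply Rdiv_lt_0_compat; auto. pose proof (Cmod_ge_0 c); lra.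
  exists M. intros x Hx. rewrite Cmod_mult. specialize (HM x Hx).
  pose proof (Cmod_ge_0 c). pose proof (Cmod_ge_0 (g x)).
  apply Rle_lt_trans with ((Cmod c + 1) * Cmod (g x)). nra.
  apply Rmult_lt_compat_l with (r := Cmod c + 1) in HM; [|lra].
  replace ((Cmod c + 1) * (eps / (Cmod c + 1))) with eps in HM by (field; lra). exact HM.
Qed.

Lemma Small_opp g : Small g -> Small (fun x => - g x)%C.
Proof.
  intros H. apply (Small_ext (fun x => (-1) * g x)%C _ 0). intros; ring.
  apply Small_scal; auto.
Qed.

Lemma Small_minus g h : Small g -> Small h -> Small (fun x => g x - h x)%C.
Proof. intros; apply Small_plus; auto; apply Small_opp; auto. Qed.

Lemma Small_zero : Small (fun _ => RtoC 0).
Proof. intros eps He; exists 0; intros; rewrite Cmod_0; auto. Qed.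

Lemma Small_scale g t : 0 < t -> Small g -> Small (fun x => g (t * x)).
Proof.
  intros Ht H eps He. destruct (H eps He) as [M HM]. exists (M / t).
  intros x Hx. apply HM. apply Rmult_lt_compat_l with (r := t) in Hx; auto.
  replace (t * (M/t)) with M in Hx by (field; lra). exact Hx.
Qed.

Lemma Small_const (c : C) : Small (fun _ => c) -> c = RtoC 0.
Proof.
  intros H. destruct (Req_dec (Cmod c) 0) as [E|E].
  - apply Cmod_eq_0; auto.
  - pose proof (Cmod_ge_0 c). destruct (H (Cmod c)) as [M HM]. lra.
    specialize (HM (M+1)). lra.
Qed.

Lemma Small_ln_const (a b : C) : Small (fun x => a * RtoC (ln x) + b)%C -> a = RtoC 0.
Proof.
  intros H. destruct (Req_dec (Cmod a) 0) as [E|E]. apply Cmod_eq_0; auto.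
  pose proof (Cmod_ge_0 a). destruct (H 1) as [M HM]. lra.
  set (y := Rmax (Rmax M 1) (exp ((Cmod b + 1) / Cmod a))).
  assert (Hy : M < y + 1). unfold y. pose proof (Rmax_l (Rmax M 1) (exp ((Cmod b + 1) / Cmod a))).
  pose proof (Rmax_l M 1). lra.
  specialize (HM (y+1) Hy).
  assert (Hpos : 0 < y + 1). unfold y. pose proof (Rmax_l (Rmax M 1) (exp ((Cmod b + 1) / Cmod a))).
  pose proof (Rmax_r M 1). lra.
  assert (Hln : (Cmod b + 1) / Cmod a < ln (y+1)).
  { rewrite <- (ln_exp ((Cmod b + 1) / Cmod a)). apply ln_increasing. apply exp_pos.
    unfold y. pose proof (Rmax_r (Rmax M 1) (exp ((Cmod b + 1) / Cmod a))). lra. }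
  assert (Cmod (a * RtoC (ln (y + 1))) <= Cmod (a * RtoC (ln (y + 1)) + b) + Cmod b).
  { replace (a * RtoC (ln (y + 1)))%C with ((a * RtoC (ln (y + 1)) + b) + (- b))%C at 1 by ring.
    eapply Rle_trans. apply Cmod_triangle. rewrite Cmod_opp. lra. }
  rewrite Cmod_mult, Cmod_R in H1.
  assert (0 < ln (y+1)). eapply Rle_lt_trans; [|exact Hln]. apply Rdiv_le_0_compat; try lra.
  pose proof (Cmod_ge_0 b); lra.
  rewrite Rabs_pos_eq in H1 by lra.
  apply Rmult_lt_compat_l with (r := Cmod a) in Hln; [|lra].
  replace (Cmod a * ((Cmod b + 1) / Cmod a)) with (Cmod b + 1) in Hln by (field; lra).
  lra.
Qed.

Definition trm (t b : R) (e : R*C*C) : R*C*C :=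
  (fst (fst e),
   (snd (fst e) * (RtoC (Rpower t (fst (fst e))) - RtoC (Rpower t b))
    + snd e * RtoC (Rpower t (fst (fst e))) * RtoC (ln t))%C,
   (snd e * (RtoC (Rpower t (fst (fst e))) - RtoC (Rpower t b)))%C).

Lemma tsum_trm L t b x : 0 < t -> 0 < x ->
  (tsum L (t * x) - RtoC (Rpower t b) * tsum L x = tsum (map (trm t b) L) x)%C.
Proof.
  intros Ht Hx. induction L as [|[[g d0] d1] L IH]; simpl.
  - ring.
  - rewrite <- IH. rewrite ln_mult by auto.
    rewrite <- (Rpower_mult_distr t x g) by auto.
    rewrite !RtoC_plus, !RtoC_mult. ring.
Qed.

Lemma Cmult_integral' (a b : C) : (a * b)%C = RtoC 0 -> a = RtoC 0 \/ b = RtoC 0.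
Proof.
  intros H. assert (Cmod a * Cmod b = 0). rewrite <- Cmod_mult, H. apply Cmod_0.
  apply Rmult_integral in H0. destruct H0; [left|right]; apply Cmod_eq_0; auto.
Qed.

Lemma uniq_core : forall n L, length L = n -> List.Forall (fun t => 0 < fst (fst t)) L ->
  forall c0 c1, Small (fun x => tsum L x + c1 * RtoC (ln x) + c0)%C ->
  c0 = RtoC 0 /\ c1 = RtoC 0.
Proof.
  induction n as [|n IH]; intros L HL HF c0 c1 HS.
  - destruct L; [|discriminate]. simpl in HS.
    assert (c1 = RtoC 0). apply (Small_ln_const c1 c0).
    eapply (Small_ext _ _ 0); [|exact HS]. intros; simpl; ring.
    subst c1. split; auto. apply Small_const.
    eapply (Small_ext _ _ 0); [|exact HS]. intros; simpl; ring.
  - destruct L as [|[[b d0] d1] L']; [discriminate|]. simpl in HL. injection HL as HL.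
    inversion HF as [|? ? Hb HF']; subst. simpl in Hb.
    set (u := RtoC (Rpower 2 b)). set (lt := RtoC (ln 2)).
    set (F := fun L c1 c0 x => (tsum L x + c1 * RtoC (ln x) + c0)%C).
    assert (Htr : forall L c1 c0, Small (F L c1 c0) ->
      Small (F (map (trm 2 b) L) (c1 * (1 - u)) (c1 * lt + c0 * (1 - u)))%C).
    { intros L c1' c0' HS'. eapply (Small_ext (fun x => (F L c1' c0' (2 * x)%R - u * F L c1' c0' x)%C) _ 0).
      intros x Hx. unfold F. rewrite <- tsum_trm by lra. rewrite ln_mult by lra.
      unfold u, lt. rewrite RtoC_plus. ring.
      apply Small_minus. apply Small_scale; auto; lra. apply Small_scal; auto. }
    pose proof (Htr _ _ _ (Htr _ _ _ HS)) as H2.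
    simpl map in H2.
    set (c1' := (c1 * (1 - u))%C) in H2. set (c0' := (c1 * lt + c0 * (1 - u))%C) in H2.
    assert (H3 : Small (F (map (trm 2 b) (map (trm 2 b) L')) (c1' * (1 - u)) (c1' * lt + c0' * (1 - u)))%C).
    { eapply (Small_ext _ _ 0); [|exact H2]. intros x Hx. unfold F; simpl. ring. }
    assert (Hf2 : List.Forall (fun t => 0 < fst (fst t)) (map (trm 2 b) (map (trm 2 b) L'))).
    { clear -HF'. induction HF'; simpl; constructor; auto. }
    destruct (IH _ (eq_trans (length_map _ _) (length_map _ _)) Hf2 _ _ H3) as [E0 E1].
    assert (Hu : (1 - u)%C <> RtoC 0).
    { unfold u. intros E. apply (f_equal fst) in E. simpl in E.
      assert (1 < Rpower 2 b). unfold Rpower. rewrite <- exp_0. apply exp_increasing.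
      apply Rmult_lt_0_compat; auto. rewrite <- ln_1. apply ln_increasing; lra. lra. }
    assert (c1 = RtoC 0).
    { destruct (Cmult_integral' _ _ E1) as [E|E]; [|contradiction].
      unfold c1' in E. destruct (Cmult_integral' _ _ E); [auto|contradiction]. }
    assert (c0 = RtoC 0).
    { unfold c0', c1' in E0. rewrite H in E0.
      replace ((0 * (1 - u) * lt + (0 * lt + c0 * (1 - u)) * (1 - u)))%C with (c0 * ((1-u)*(1-u)))%C in E0 by ring.
      destruct (Cmult_integral' _ _ E0) as [E|E]; auto.
      destruct (Cmult_integral' _ _ E); contradiction. }
    auto.
Qed.

Definition scl (c : C) (e : R*C*C) : R*C*C := (fst (fst e), (c * snd (fst e))%C, (c * snd e)%C).

Lemma tsum_app L1 L2 x : tsum (L1 ++ L2) x = (tsum L1 x + tsum L2 x)%C.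
Proof. induction L1 as [|e L1 IH]; simpl. ring. rewrite IH. ring. Qed.

Lemma tsum_scl c L x : tsum (map (scl c) L) x = (c * tsum L x)%C.
Proof. induction L as [|[[g d0] d1] L IH]; simpl. ring. rewrite IH. ring. Qed.

Lemma Forall_scl c L : List.Forall (fun t => 0 < fst (fst t)) L ->
  List.Forall (fun t => 0 < fst (fst t)) (map (scl c) L).
Proof. induction 1; simpl; constructor; auto. Qed.

Lemma HasExp_uniq F a b a' b' : HasExp F a b -> HasExp F a' b' -> a = a' /\ b = b'.
Proof.
  intros [L [HL H]] [L' [HL' H']].
  destruct (uniq_core _ (L' ++ map (scl (-1)) L) eq_refl) with (c0 := (a' - a)%C) (c1 := (b' - b)%C)
    as [E1 E2].
  apply Forall_app; split; auto. apply Forall_scl; auto.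
  eapply (Small_ext _ _ 0); [|exact (Small_minus _ _ H H')].
  intros x _. rewrite tsum_app, tsum_scl. ring.
  split; [apply (f_equal (fun z => z + a)%C) in E1 | apply (f_equal (fun z => z + b)%C) in E2];
  ring_simplify in E1; ring_simplify in E2; auto.
Qed.

Lemma HasExp_ext F G a b M0 : (forall x, M0 < x -> F x = G x) -> HasExp F a b -> HasExp G a b.
Proof.
  intros E [L [HL H]]. exists L; split; auto. eapply (Small_ext _ _ M0); [|exact H].
  intros x Hx; simpl. rewrite E; auto.
Qed.

Lemma HasExp_plus F G a b a' b' : HasExp F a b -> HasExp G a' b' ->
  HasExp (fun x => F x + G x)%C (a + a') (b + b').
Proof.
  intros [L [HL H]] [L' [HL' H']]. exists (L ++ L'). split. apply Forall_app; auto.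
  eapply (Small_ext _ _ 0); [|exact (Small_plus _ _ H H')].
  intros x _. rewrite tsum_app. ring.
Qed.

Lemma HasExp_scal c F a b : HasExp F a b -> HasExp (fun x => c * F x)%C (c * a) (c * b).
Proof.
  intros [L [HL H]]. exists (map (scl c) L). split. apply Forall_scl; auto.
  eapply (Small_ext _ _ 0); [|exact (Small_scal c _ H)].
  intros x _. rewrite tsum_scl. ring.
Qed.

Lemma HasExp_opp F a b : HasExp F a b -> HasExp (fun x => - F x)%C (- a) (- b).
Proof.
  intros H. apply (HasExp_scal (-1)) in H.
  replace (-a)%C with (-1 * a)%C by ring. replace (-b)%C with (-1 * b)%C by ring.
  eapply HasExp_ext; [|exact H]. instantiate (1:=0). intros; simpl; ring.
Qed.

Lemma HasExp_minus F G a b a' b' : HasExp F a b -> HasExp G a' b' ->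
  HasExp (fun x => F x - G x)%C (a - a') (b - b').
Proof. intros; apply HasExp_plus; auto; apply HasExp_opp; auto. Qed.

Lemma HasExp_Small F : Small F -> HasExp F 0 0.
Proof.
  intros H. exists nil. split. constructor. eapply (Small_ext _ _ 0); [|exact H].
  intros; simpl; ring.
Qed.

Lemma HasExp_const c : HasExp (fun _ => c) c 0.
Proof.
  exists nil. split. constructor. eapply (Small_ext _ _ 0); [|exact Small_zero].
  intros; simpl; ring.
Qed.

Lemma HasExp_ln : HasExp (fun x => RtoC (ln x)) 0 1.
Proof.
  exists nil. split. constructor. eapply (Small_ext _ _ 0); [|exact Small_zero].
  intros; simpl; ring.
Qed.

Lemma HasExp_term b d0 d1 : 0 < b ->
  HasExp (fun x => (d0 + d1 * RtoC (ln x)) * RtoC (Rpower x b))%C 0 0.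
Proof.
  intros Hb. exists ((b, d0, d1) :: nil). split. constructor; auto.
  eapply (Small_ext _ _ 0); [|exact Small_zero]. intros; simpl; ring.
Qed.

Lemma HasExp_Small_plus F G a b : HasExp F a b -> Small G -> HasExp (fun x => F x + G x)%C a b.
Proof.
  intros H1 H2. apply HasExp_Small in H2. pose proof (HasExp_plus _ _ _ _ _ _ H1 H2).
  rewrite !Cplus_0_r in H. exact H.
Qed.

Fixpoint rsum (f : nat -> R) (n : nat) : R :=
  match n with O => 0 | S m => rsum f m + f m end.

Definition TayK (K : nat) (g : R -> R) : Prop :=
  exists (c : nat -> R) (B : R), forall u, 0 <= u <= 1 ->
    Rabs (g u - rsum (fun k => c k * u ^ k) (S K)) <= B * u ^ (S K).

Lemma is_derive_poly (c : nat -> R) K u :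
  is_derive (fun v => rsum (fun k => c k / INR (S k) * v ^ (S k)) K) u
            (rsum (fun k => c k * u ^ k) K).
Proof.
  induction K as [|K IH]; cbn [rsum].
  - apply (is_derive_const (K := R_AbsRing) (V := R_NormedModule) 0).
  - apply (is_derive_plus (K := R_AbsRing) (V := R_NormedModule)); auto.
    auto_derive. auto. simpl pred. field. change (INR (S K) <> 0). apply not_0_INR; lia.
Qed.

Lemma TayK_base (g h : R -> R) B :
  (forall u, -1/2 < u < 2 -> is_derive g u (h u)) ->
  (forall u, 0 <= u <= 1 -> Rabs (h u) <= B) -> TayK 0 g.
Proof.
  intros Hd Hb. exists (fun _ => g 0), B. intros u Hu. simpl.
  destruct (Req_dec u 0) as [->|Hu0].
  - replace (g 0 - (0 + g 0 * 1)) with 0 by ring. rewrite Rabs_R0.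
    assert (0 <= B) by (eapply Rle_trans; [apply Rabs_pos|apply (Hb 0); lra]). lra.
  - destruct (MVT_gen g 0 u h) as [xi [Hxi E]].
    + intros x Hx. rewrite Rmin_left, Rmax_right in Hx by lra. apply Hd. lra.
    + intros x Hx. rewrite Rmin_left, Rmax_right in Hx by lra.
      apply continuity_pt_filterlim. apply (ex_derive_continuous (K := R_AbsRing) (V := R_NormedModule)).
      eexists; apply Hd; lra.
    + rewrite Rmin_left, Rmax_right in Hxi by lra.
      replace (g u - (0 + g 0 * 1)) with (g u - g 0) by ring. rewrite E, Rabs_mult.
      rewrite (Rabs_pos_eq (u - 0)) by lra. rewrite Rmult_1_r, Rminus_0_r.
      apply Rmult_le_compat_r; try lra. apply Hb; lra.
Qed.

Lemma TayK_step K (g h : R -> R) :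
  (forall u, -1/2 < u < 2 -> is_derive g u (h u)) -> TayK K h -> TayK (S K) g.
Proof.
  intros Hd [c [B Hb]].
  set (c' := fun k => match k with O => g 0 | S k' => c k' / INR (S k') end).
  exists c', B. intros u Hu.
  set (Rf := fun v : R => g v - g 0 - rsum (fun k => c k / INR (S k) * v ^ (S k)) (S K)).
  assert (ER : forall v, g v - rsum (fun k => c' k * v ^ k) (S (S K)) = Rf v).
  { intros v. unfold Rf. clear. induction K as [|K IH].
    - simpl. unfold c'. ring.
    - change (rsum (fun k => c' k * v ^ k) (S (S (S K))))
        with (rsum (fun k => c' k * v ^ k) (S (S K)) + c' (S (S K)) * v ^ (S (S K))).
      change (rsum (fun k => c k / INR (S k) * v ^ S k) (S (S K)))
        with (rsum (fun k => c k / INR (S k) * v ^ S k) (S K) + c (S K) / INR (S (S K)) * v ^ S (S K)).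
      assert (g v - rsum (fun k => c' k * v ^ k) (S (S K)) =
              g v - g 0 - rsum (fun k => c k / INR (S k) * v ^ S k) (S K)) by exact IH.
      unfold c' at 2. lra. }
  rewrite ER.
  assert (HRf0 : Rf 0 = 0).
  { unfold Rf. cbv beta. rewrite Rminus_diag.
    generalize (S K). intro n. induction n; cbn [rsum]. ring. rewrite pow_i by lia. lra. }
  destruct (Req_dec u 0) as [->|Hu0].
  - rewrite HRf0, Rabs_R0. simpl. rewrite Rmult_0_l, Rmult_0_r. lra.
  - assert (HdR : forall v, -1/2 < v < 2 -> is_derive Rf v (h v - rsum (fun k => c k * v ^ k) (S K))).
    { intros v Hv. unfold Rf. apply (is_derive_minus (K := R_AbsRing) (V := R_NormedModule)).
      replace (h v) with (h v - 0) by ring. apply (is_derive_minus (K := R_AbsRing) (V := R_NormedModule)).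
      apply Hd; auto. apply (is_derive_const (K := R_AbsRing) (V := R_NormedModule)).
      apply is_derive_poly. }
    destruct (MVT_gen Rf 0 u (fun v => h v - rsum (fun k => c k * v ^ k) (S K))) as [xi [Hxi E]].
    + intros x Hx. rewrite Rmin_left, Rmax_right in Hx by lra. apply HdR. lra.
    + intros x Hx. rewrite Rmin_left, Rmax_right in Hx by lra.
      apply continuity_pt_filterlim. apply (ex_derive_continuous (K := R_AbsRing) (V := R_NormedModule)).
      eexists; apply HdR; lra.
    + rewrite Rmin_left, Rmax_right in Hxi by lra.
      rewrite HRf0 in E. replace (Rf u) with (Rf u - 0) by ring. rewrite E, Rabs_mult.
      replace (u - 0) with u by ring. rewrite (Rabs_pos_eq u) by lra.
      change (u ^ S (S K)) with (u * u ^ S K).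
      assert (0 <= B * xi ^ S K). eapply Rle_trans; [apply Rabs_pos|apply Hb; lra].
      assert (Rabs (h xi - rsum (fun k => c k * xi ^ k) (S K)) <= B * u ^ S K).
      { eapply Rle_trans. apply Hb; lra.
        assert (0 <= B). { specialize (Hb 1 ltac:(lra)). rewrite pow1, Rmult_1_r in Hb.
          eapply Rle_trans; [apply Rabs_pos|exact Hb]. }
        apply Rmult_le_compat_l; try lra. apply pow_incr; lra. }
      nra.
Qed.

Lemma TayK_scal K a g : TayK K g -> TayK K (fun u => a * g u).
Proof.
  intros [c [B H]]. exists (fun k => a * c k), (Rabs a * B). intros u Hu.
  replace (a * g u - rsum (fun k => a * c k * u ^ k) (S K)) with
    (a * (g u - rsum (fun k => c k * u ^ k) (S K))).
  rewrite Rabs_mult, Rmult_assoc. apply Rmult_le_compat_l. apply Rabs_pos. apply H; auto.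
  generalize (S K); intro n; induction n; cbn [rsum]. ring. rewrite Rmult_minus_distr_l in IHn |- *.
  lra.
Qed.

Lemma derive_pow1 r u : -1 < u ->
  is_derive (fun v => Rpower (1 + v) r) u (r * Rpower (1 + u) (r - 1)).
Proof.
  intros Hu. unfold Rpower. auto_derive. lra.
  replace ((r - 1) * ln (1 + u)) with (r * ln (1 + u) + - ln (1 + u)) by ring.
  rewrite exp_plus, exp_Ropp, exp_ln by lra. field. lra.
Qed.

Lemma Rpower_bound s u : 0 <= u <= 1 -> Rpower (1 + u) s <= Rpower 2 (Rabs s).
Proof.
  intros Hu. unfold Rpower. destruct (Rle_lt_dec (exp (s * ln (1 + u))) (exp (Rabs s * ln 2))); auto.
  apply Rlt_le. exfalso.
  assert (0 <= ln (1 + u)). rewrite <- ln_1. apply ln_le; lra.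
  assert (ln (1+u) <= ln 2). apply ln_le; lra.
  assert (s * ln (1 + u) <= Rabs s * ln 2).
  { apply Rle_trans with (Rabs s * ln (1+u)). apply Rmult_le_compat_r; auto. apply Rle_abs.
    apply Rmult_le_compat_l; auto. apply Rabs_pos. }
  destruct H1. apply exp_increasing in H1. lra. rewrite H1 in *. lra.
Qed.

Lemma TayK_pow : forall K r, TayK K (fun u => Rpower (1 + u) r).
Proof.
  induction K as [|K IH]; intros r.
  - apply (TayK_base _ (fun u => r * Rpower (1 + u) (r - 1)) (Rabs r * Rpower 2 (Rabs (r - 1)))).
    intros u Hu. apply derive_pow1. lra.
    intros u Hu. rewrite Rabs_mult. apply Rmult_le_compat_l. apply Rabs_pos.
    rewrite Rabs_pos_eq. apply Rpower_bound; auto. unfold Rpower; apply Rlt_le, exp_pos.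
  - apply (TayK_step _ _ (fun u => r * Rpower (1 + u) (r - 1))).
    intros u Hu. apply derive_pow1. lra.
    apply TayK_scal. apply IH.
Qed.

Lemma TayK_ext K g h : (forall u, 0 <= u <= 1 -> g u = h u) -> TayK K g -> TayK K h.
Proof.
  intros E [c [B H]]. exists c, B. intros u Hu. rewrite <- E; auto.
Qed.

Lemma TayK_ln : forall K, TayK K (fun u => ln (1 + u)).
Proof.
  assert (Hd : forall u, -1/2 < u < 2 -> is_derive (fun v => ln (1 + v)) u (Rpower (1 + u) (- (1)))).
  { intros u Hu. rewrite Rpower_Ropp, Rpower_1 by lra. auto_derive. lra. field. lra. }
  destruct K as [|K].
  - apply (TayK_base _ (fun u => Rpower (1 + u) (- (1))) 1). exact Hd. intros u Hu.
    rewrite Rpower_Ropp, Rpower_1 by lra. rewrite Rabs_pos_eq.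
    rewrite <- Rinv_1. apply Rinv_le_contravar; lra. apply Rlt_le, Rinv_0_lt_compat; lra.
  - apply (TayK_step _ _ _ Hd). apply TayK_pow.
Qed.

Definition HasE (F : R -> C) : Prop := exists c0 c1, HasExp F c0 c1.

Lemma HasE_plus F G : HasE F -> HasE G -> HasE (fun x => F x + G x)%C.
Proof. intros [a [b H]] [a' [b' H']]. do 2 eexists. apply HasExp_plus; eauto. Qed.
Lemma HasE_scal c F : HasE F -> HasE (fun x => c * F x)%C.
Proof. intros [a [b H]]. do 2 eexists. apply HasExp_scal; eauto. Qed.
Lemma HasE_minus F G : HasE F -> HasE G -> HasE (fun x => F x - G x)%C.
Proof. intros [a [b H]] [a' [b' H']]. do 2 eexists. apply HasExp_minus; eauto. Qed.
Lemma HasE_ext F G M0 : (forall x, M0 < x -> F x = G x) -> HasE F -> HasE G.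
Proof. intros E [a [b H]]. do 2 eexists. eapply HasExp_ext; eauto. Qed.
Lemma HasE_Small F : Small F -> HasE F.
Proof. intros H. do 2 eexists. apply HasExp_Small; eauto. Qed.
Lemma HasE_const c : HasE (fun _ => c).
Proof. do 2 eexists. apply HasExp_const. Qed.
Lemma HasE_Small_plus F G : HasE F -> Small G -> HasE (fun x => F x + G x)%C.
Proof. intros; apply HasE_plus; auto; apply HasE_Small; auto. Qed.

Lemma Small_rpow_neg b : b < 0 -> Small (fun x => RtoC (Rpower x b)).
Proof.
  intros Hb eps He. exists (exp (ln eps / b)). intros x Hx.
  assert (0 < x) by (eapply Rlt_trans; [apply exp_pos|exact Hx]).
  rewrite Cmod_R, Rabs_pos_eq by (unfold Rpower; apply Rlt_le, exp_pos).
  unfold Rpower. rewrite <- (exp_ln eps) by auto. apply exp_increasing.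
  apply ln_increasing in Hx; [|apply exp_pos]. rewrite ln_exp in Hx.
  apply Rmult_lt_compat_l with (r := - b) in Hx; [|lra].
  replace (- b * (ln eps / b)) with (- ln eps) in Hx by (field; lra). lra.
Qed.

Lemma HasE_rpow b : HasE (fun x => RtoC (Rpower x b)).
Proof.
  destruct (Rtotal_order b 0) as [Hb|[Hb|Hb]].
  - apply HasE_Small, Small_rpow_neg; auto.
  - subst. apply (HasE_ext (fun _ => RtoC 1) _ 0). intros x Hx. rewrite Rpower_O; auto.
    apply HasE_const.
  - do 2 eexists. eapply HasExp_ext; [|apply (HasExp_term b 1 0 Hb)]. instantiate (1 := 0).
    intros x _. simpl. ring.
Qed.

Lemma HasE_rsum (f : nat -> R -> R) n :
  (forall k, HasE (fun x => RtoC (f k x))) -> HasE (fun x => RtoC (rsum (fun k => f k x) n)).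
Proof.
  intros H. induction n as [|n IH]; cbn [rsum].
  - apply HasE_const.
  - eapply (HasE_ext _ _ 0); [|apply HasE_plus; [exact IH|apply H]]. intros; simpl.
    rewrite RtoC_plus. auto.
Qed.

Lemma HasE_taylor a g : (forall K, TayK K g) ->
  HasE (fun x => RtoC (Rpower x a * g (/ x))).
Proof.
  intros HT. set (K := Z.to_nat (up a)).
  assert (HK : a < INR (S K)).
  { destruct (archimed a) as [H1 _]. rewrite S_INR. unfold K.
    destruct (Z_le_gt_dec (up a) 0) as [Hz|Hz].
    - pose proof (pos_INR (Z.to_nat (up a))). apply IZR_le in Hz. lra.
    - rewrite INR_IZR_INZ, Z2Nat.id by lia. lra. }
  destruct (HT K) as [c [B HB]].
  eapply (HasE_ext (fun x => RtoC (rsum (fun k => c k * Rpower x (a - INR k))%R (S K))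
       + RtoC (Rpower x a * (g (/x) - rsum (fun k => c k * (/ x) ^ k)%R (S K)))%R)%C _ 1).
  { intros x Hx. rewrite <- RtoC_plus. f_equal.
    assert (E : forall n, rsum (fun k => c k * Rpower x (a - INR k)) n =
                 Rpower x a * rsum (fun k => c k * (/ x) ^ k) n).
    { induction n as [|n IH]; cbn [rsum]. ring. rewrite IH.
      rewrite Rmult_plus_distr_l. f_equal.
      unfold Rminus. rewrite Rpower_plus. rewrite Rpower_Ropp, Rpower_pow by lra.
      rewrite pow_inv. ring. }
    rewrite E. ring. }
  apply HasE_Small_plus.
  - apply HasE_rsum. intros k. eapply (HasE_ext (fun x => c k * RtoC (Rpower x (a - INR k)))%C _ 0).
    intros; rewrite RtoC_mult; auto. apply HasE_scal, HasE_rpow.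
  - apply (Small_le (fun x => RtoC (B * Rpower x (a - INR (S K)))) _ 1).
    + intros x Hx. rewrite !Cmod_R. rewrite Rabs_mult.
      rewrite (Rabs_pos_eq (Rpower x a)) by (unfold Rpower; apply Rlt_le, exp_pos).
      assert (Hu : 0 <= / x <= 1). split. apply Rlt_le, Rinv_0_lt_compat; lra.
      rewrite <- Rinv_1. apply Rinv_le_contravar; lra.
      specialize (HB (/ x) Hu).
      eapply Rle_trans. apply Rmult_le_compat_l. unfold Rpower; apply Rlt_le, exp_pos. exact HB.
      unfold Rminus. rewrite Rpower_plus, Rpower_Ropp, Rpower_pow by lra. rewrite pow_inv.
      assert (0 <= B * (/ x) ^ S K). eapply Rle_trans; [apply Rabs_pos|exact HB].
      assert (0 < (/ x) ^ S K) by (apply pow_lt, Rinv_0_lt_compat; lra).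
      assert (0 <= B) by nra.
      assert (0 < Rpower x a) by (unfold Rpower; apply exp_pos).
      assert (0 < / x ^ S K) by (apply Rinv_0_lt_compat, pow_lt; lra).
      rewrite Rabs_pos_eq. right; ring. apply Rmult_le_pos; auto. apply Rmult_le_pos; lra.
    + eapply (Small_ext (fun x => B * RtoC (Rpower x (a - INR (S K))))%C _ 0).
      intros; rewrite RtoC_mult; auto. apply Small_scal, Small_rpow_neg. lra.
Qed.

Lemma Carg_pos r : 0 < r -> Carg (RtoC r) = 0.
Proof.
  intros Hr. unfold Carg. simpl. destruct (Rlt_dec 0 r); [|lra].
  unfold Rdiv. rewrite Rmult_0_l. apply atan_0.
Qed.

Lemma Clog_pos r : 0 < r -> Clog (RtoC r) = RtoC (ln r).
Proof.
  intros Hr. unfold Clog. rewrite Carg_pos, Cmod_R, Rabs_pos_eq by lra. reflexivity.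
Qed.

Lemma Cpow_pos (r a : R) : 0 < r -> Defs.Cpow (RtoC r) a = RtoC (Rpower r a).
Proof.
  intros Hr. unfold Defs.Cpow, Cexp. rewrite Clog_pos by auto. unfold Rpower.
  apply injective_projections; simpl.
  - replace (a * ln r - 0 * 0) with (a * ln r) by ring.
    replace (a * 0 + 0 * ln r) with 0 by ring. rewrite cos_0. ring.
  - replace (a * 0 + 0 * ln r) with 0 by ring. rewrite sin_0. ring.
Qed.

Lemma cpown_R r n : cpown (RtoC r) n = RtoC (r ^ n).
Proof. induction n; simpl. reflexivity. rewrite IHn, RtoC_mult. reflexivity. Qed.

Lemma csum_ext f g n : (forall k, (k < n)%nat -> f k = g k) -> csum f n = csum g n.
Proof. induction n; intros H; simpl; auto. rewrite IHn, H; auto. Qed.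

Lemma HasExp_csum (f : nat -> R -> C) (a b : nat -> C) n :
  (forall k, HasExp (f k) (a k) (b k)) ->
  HasExp (fun x => csum (fun k => f k x) n) (csum a n) (csum b n).
Proof.
  intros H. induction n; simpl.
  - apply HasExp_const.
  - apply HasExp_plus; auto.
Qed.

Lemma HasE_csum (f : nat -> R -> C) n :
  (forall k, HasE (f k)) -> HasE (fun x => csum (fun k => f k x) n).
Proof.
  intros H. induction n; simpl. apply HasE_const. apply HasE_plus; auto.
Qed.

Lemma csum_const0 n : csum (fun _ => RtoC 0) n = RtoC 0.
Proof. induction n; simpl; auto. rewrite IHn. ring. Qed.

Lemma HasExp_xpowS n : HasExp (fun x => RtoC (x ^ (S n))) 0 0.
Proof.
  eapply HasExp_ext; [|apply (HasExp_term (INR (S n)) 1 0)]. instantiate (1 := 0).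
  intros x Hx. cbv beta. rewrite (Rpower_pow (S n) x Hx). ring.
  apply lt_0_INR; lia.
Qed.

Lemma HasExp_poly0 (d : nat -> C) n :
  HasExp (fun x => csum (fun k => d k * RtoC (x ^ (S k))) n)%C 0 0.
Proof.
  pose proof (HasExp_csum (fun k x => d k * RtoC (x ^ (S k)))%C (fun k => d k * 0)%C
     (fun k => d k * 0)%C n) as H.
  rewrite (csum_ext (fun k => d k * 0)%C (fun _ => RtoC 0)) in H by (intros; ring).
  rewrite csum_const0 in H. apply H. intros k. apply HasExp_scal, HasExp_xpowS.
Qed.

Lemma HasE_xpow n : HasE (fun x => RtoC (x ^ n)).
Proof.
  destruct n. apply (HasE_ext (fun _ => RtoC 1) _ 0). intros; simpl; auto. apply HasE_const.
  do 2 eexists; apply HasExp_xpowS.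
Qed.

Lemma HasE_onepow a : HasE (fun x => RtoC (Rpower (1 + x) a)).
Proof.
  apply (HasE_ext (fun x => RtoC (Rpower x a * Rpower (1 + / x) a)) _ 0).
  - intros x Hx. f_equal. rewrite Rpower_mult_distr by (try apply Rplus_lt_0_compat; try apply Rinv_0_lt_compat; lra).
    f_equal. field. lra.
  - apply (HasE_taylor a (fun u => Rpower (1 + u) a)). intros K; apply TayK_pow.
Qed.

Lemma sum_f_rsum f n : sum_f_R0 f n = rsum f (S n).
Proof. induction n; simpl. ring. rewrite IHn. reflexivity. Qed.

Lemma HasE_onepow_ln (l : nat) : HasE (fun x => RtoC ((1 + x) ^ l * ln (1 + x))).
Proof.
  apply (HasE_ext (fun x => RtoC (rsum (fun i => Binomial.C l i * (x ^ i * ln x))%R (S l))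
                          + RtoC (rsum (fun i => Binomial.C l i * (Rpower x (INR i) * ln (1 + / x)))%R (S l)))%C _ 0).
  - intros x Hx. rewrite <- RtoC_plus. f_equal.
    replace (1 + x) with (x * (1 + / x)) at 2 by (field; lra).
    rewrite ln_mult by (try apply Rplus_lt_0_compat; try apply Rinv_0_lt_compat; lra).
    replace (1 + x) with (x + 1) by ring. rewrite binomial, sum_f_rsum.
    generalize (S l). intros n. induction n; cbn [rsum]. ring.
    rewrite Rmult_plus_distr_r, <- IHn. rewrite Rpower_pow by lra. rewrite pow1. ring.
  - apply HasE_plus; apply HasE_rsum; intros i.
    + apply (HasE_ext (fun x => RtoC (Binomial.C l i) * RtoC (x ^ i * ln x)%R)%C _ 0).
      intros; rewrite <- RtoC_mult; reflexivity. apply HasE_scal.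
      destruct i.
      * apply (HasE_ext (fun x => RtoC (ln x)) _ 0). intros; simpl; f_equal; ring.
        do 2 eexists; apply HasExp_ln.
      * do 2 eexists. eapply HasExp_ext; [|apply (HasExp_term (INR (S i)) 0 1)].
        instantiate (1 := 0). intros x Hx. cbv beta. rewrite (Rpower_pow (S i) x Hx). rewrite RtoC_mult. ring.
        apply lt_0_INR; lia.
    + apply (HasE_ext (fun x => RtoC (Binomial.C l i) * RtoC (Rpower x (INR i) * ln (1 + / x))%R)%C _ 0).
      intros; rewrite <- RtoC_mult; reflexivity. apply HasE_scal.
      apply (HasE_taylor (INR i) (fun u => ln (1 + u))). intros K; apply TayK_ln.
Qed.

Lemma atan_sign u : 0 <= u -> 0 <= atan u.
Proof. intros [H|<-]. rewrite <- atan_0. left; apply atan_increasing; auto. rewrite atan_0; lra. Qed.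
Lemma atan_sign' u : u <= 0 -> atan u <= 0.
Proof. intros H. rewrite <- (Ropp_involutive u), atan_opp. pose proof (atan_sign (- u)). lra. Qed.

Lemma atan_add u v : u * v < 1 -> atan u + atan v = atan ((u + v) / (1 - u * v)).
Proof.
  intros Huv. pose proof (atan_bound u). pose proof (atan_bound v).
  assert (Hr : - (PI / 2) < atan u + atan v < PI / 2).
  { destruct (Rlt_le_dec 0 u) as [Hu|Hu]; destruct (Rlt_le_dec 0 v) as [Hv|Hv].
    - assert (v < / u). { apply Rmult_lt_reg_l with u; auto. rewrite Rinv_r by lra. lra. }
      apply atan_increasing in H1. rewrite atan_inv in H1 by auto.
      pose proof (atan_sign u). pose proof (atan_sign v). lra.
    - pose proof (atan_sign u). pose proof (atan_sign' v). lra.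
    - pose proof (atan_sign' u). pose proof (atan_sign v). lra.
    - destruct (Req_dec u 0) as [->|Hu0]. rewrite atan_0. lra.
      destruct (Req_dec v 0) as [->|Hv0]. rewrite atan_0. lra.
      assert (- v < / (- u)). { apply Rmult_lt_reg_l with (- u); [lra|]. rewrite Rinv_r by lra. lra. }
      apply atan_increasing in H1. rewrite atan_inv in H1 by lra. rewrite !atan_opp in H1.
      pose proof (atan_sign' u). pose proof (atan_sign' v). lra. }
  rewrite <- (atan_tan (atan u + atan v)) by lra. f_equal.
  rewrite tan_plus. rewrite !tan_atan. reflexivity.
  apply Rgt_not_eq, cos_gt_0; lra. apply Rgt_not_eq, cos_gt_0; lra.
  apply Rgt_not_eq, cos_gt_0; lra. rewrite !tan_atan. lra.
Qed.

Lemma Carg_rhp z : 0 < fst z -> Carg z = atan (snd z / fst z).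
Proof. intros H. unfold Carg. destruct (Rlt_dec 0 (fst z)); [reflexivity|lra]. Qed.

Lemma Cmod_pos_rhp z : 0 < fst z -> 0 < Cmod z.
Proof.
  intros H. unfold Cmod. apply sqrt_lt_R0. pose proof (pow2_ge_0 (snd z)).
  assert (0 < fst z ^ 2) by (apply pow_lt; auto). lra.
Qed.

Lemma Clog_mult a b : 0 < fst a -> 0 < fst b -> 0 < fst (a * b)%C ->
  Clog (a * b)%C = (Clog a + Clog b)%C.
Proof.
  intros Ha Hb Hab. unfold Clog. apply injective_projections; simpl.
  - rewrite Cmod_mult, ln_mult; auto; apply Cmod_pos_rhp; auto.
  - rewrite !Carg_rhp; auto. simpl in Hab |- *. destruct a as [a1 a2], b as [b1 b2]. simpl in *.
    rewrite atan_add.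
    f_equal. field. repeat split; lra.
    assert (a2 / a1 * (b2 / b1) = (a2 * b2) / (a1 * b1)) by (field; lra).
    rewrite H. apply Rmult_lt_reg_r with (a1 * b1). nra. unfold Rdiv.
    rewrite Rmult_assoc, Rinv_l by nra. lra.
Qed.

Lemma Carg_rhp_conv z : Rabs (Carg z) < PI / 2 -> z <> RtoC 0 -> 0 < fst z.
Proof.
  intros H Hz. destruct z as [x y]. unfold Carg in H. simpl in H |- *.
  pose proof PI_RGT_0. revert H.
  destruct (Rlt_dec 0 x); auto. intros H; exfalso.
  revert H. destruct (Rlt_dec x 0); intros H.
  - revert H. destruct (Rle_dec 0 y); intros H.
    + assert (y / x <= 0). { unfold Rdiv. assert (/ x < 0) by (apply Rinv_lt_0_compat; lra). nra. }
      pose proof (atan_bound (y / x)). apply atan_sign' in H1.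
      rewrite Rabs_pos_eq in H by lra. lra.
    + assert (0 < y / x). { unfold Rdiv. assert (/ x < 0) by (apply Rinv_lt_0_compat; lra). nra. }
      pose proof (atan_bound (y / x)). apply Rlt_le, atan_sign in H1.
      rewrite Rabs_left in H by lra. lra.
  - assert (x = 0) by lra. subst. revert H.
    destruct (Rlt_dec 0 y); intros H. rewrite Rabs_pos_eq in H; lra. revert H.
    destruct (Rlt_dec y 0); intros H. rewrite Rabs_left in H; lra.
    apply Hz. apply injective_projections; simpl; lra.
Qed.

Lemma sector_re theta c z : 0 < theta < PI -> 0 < c -> in_sector theta c z -> c <= fst z.
Proof.
  intros Ht Hc Hs. unfold in_sector in Hs.
  destruct (Ceq_dec (z - RtoC c)%C (RtoC 0)) as [E|E].
  - assert (fst (z - RtoC c)%C = 0) by (rewrite E; reflexivity). simpl in H. lra.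
  - apply Carg_rhp_conv in E. simpl in E. lra. lra.
Qed.

Lemma cpown_mult x y n : cpown (x * y)%C n = (cpown x n * cpown y n)%C.
Proof. induction n; simpl. ring. rewrite IHn. ring. Qed.

Lemma Cmod_cpown z n : Cmod (cpown z n) = Cmod z ^ n.
Proof. induction n; simpl. apply Cmod_1. rewrite Cmod_mult, IHn. ring. Qed.

Lemma fst_csum f n : fst (csum f n) = rsum (fun k => fst (f k)) n.
Proof. induction n; simpl; auto. rewrite IHn. reflexivity. Qed.
Lemma snd_csum f n : snd (csum f n) = rsum (fun k => snd (f k)) n.
Proof. induction n; simpl; auto. rewrite IHn. reflexivity. Qed.

Lemma Cmod_le_sum z : Cmod z <= Rabs (fst z) + Rabs (snd z).
Proof.
  unfold Cmod. rewrite <- (sqrt_pow2 (Rabs (fst z) + Rabs (snd z))) by (pose proof (Rabs_pos (fst z)); pose proof (Rabs_pos (snd z)); lra).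
  apply sqrt_le_1_alt. rewrite <- (pow2_abs (fst z)), <- (pow2_abs (snd z)).
  pose proof (Rabs_pos (fst z)); pose proof (Rabs_pos (snd z)). nra.
Qed.

Definition cc (j : nat) : R := (-1) ^ (S j) / INR (S j).

Lemma ln_sqrt' q : 0 < q -> ln (sqrt q) = ln q / 2.
Proof.
  intros Hq. assert (0 < sqrt q) by (apply sqrt_lt_R0; auto).
  rewrite <- (sqrt_sqrt q) at 2 by lra. rewrite ln_mult by auto. field.
Qed.

Lemma cpown_ntw (w : C) t n : cpown (- (RtoC t * w))%C n = (RtoC ((-1) ^ n * t ^ n) * cpown w n)%C.
Proof.
  induction n; simpl cpown. apply injective_projections; simpl; ring.
  rewrite IHn. destruct (cpown w n) as [u v]; destruct w as [a b].
  apply injective_projections; simpl; ring.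
Qed.

Lemma geom_DD (w : C) (t : R) p : (1 + RtoC t * w)%C <> RtoC 0 ->
  (w / (1 + RtoC t * w) + csum (fun k => RtoC (cc k * INR (S k) * t ^ k) * cpown w (S k)) p)%C
  = (w * cpown (- (RtoC t * w)) p / (1 + RtoC t * w))%C.
Proof.
  intros H. induction p as [|p IH]; cbn [csum].
  - simpl. field; auto.
  - rewrite Cplus_assoc, IH.
    replace (cc p * INR (S p) * t ^ p) with ((-1) ^ S p * t ^ p).
    2:{ unfold cc. field. apply not_0_INR; lia. }
    rewrite !cpown_ntw. change (cpown w (S p)) with (w * cpown w p)%C.
    replace (RtoC ((-1) ^ S p * t ^ p)) with (- RtoC ((-1) ^ p * t ^ p))%C
      by (apply injective_projections; simpl; ring).
    replace (RtoC ((-1) ^ S p * t ^ S p)) with (- RtoC t * RtoC ((-1) ^ p * t ^ p))%C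
      by (apply injective_projections; simpl; ring).
    field; auto.
Qed.

Lemma rsum_ext f g n : (forall k, (k < n)%nat -> f k = g k) -> rsum f n = rsum g n.
Proof. induction n; intros H; simpl; auto. rewrite IHn, H; auto. Qed.

Lemma fst_Cplus (x y : C) : fst (x + y)%C = fst x + fst y. Proof. reflexivity. Qed.
Lemma snd_Cplus (x y : C) : snd (x + y)%C = snd x + snd y. Proof. reflexivity. Qed.

Lemma fst_RtoCm (r : R) (z : C) : fst (RtoC r * z)%C = r * fst z. Proof. simpl. ring. Qed.
Lemma snd_RtoCm (r : R) (z : C) : snd (RtoC r * z)%C = r * snd z. Proof. simpl. ring. Qed.

Section LogTaylor.
Variable w : C.
Variable p : nat.
Let a := fst w.
Let b := snd w.
Let Q t := (1 + t * a) ^ 2 + (t * b) ^ 2.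
Let ReF t := ln (Q t) / 2 + rsum (fun k => (cc k * INR (S k) * fst (cpown w (S k))) / INR (S k) * t ^ S k) p.
Let ImF t := atan (t * b / (1 + t * a)) + rsum (fun k => (cc k * INR (S k) * snd (cpown w (S k))) / INR (S k) * t ^ S k) p.
Let F t := (Clog (1 + RtoC t * w) + csum (fun j => RtoC (cc j) * cpown (RtoC t * w) (S j)) p)%C.
Let DD t := (w / (1 + RtoC t * w) + csum (fun k => RtoC (cc k * INR (S k) * t ^ k) * cpown w (S k)) p)%C.

Lemma Q_pos t : 0 < 1 + t * a -> 0 < Q t.
Proof. intros H. unfold Q. pose proof (pow2_ge_0 (t * b)). assert (0 < (1 + t * a) ^ 2) by (apply pow_lt; auto). lra. Qed.

Lemma one_tw_fst t : fst (1 + RtoC t * w)%C = 1 + t * a.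
Proof. unfold a. simpl. ring. Qed.
Lemma one_tw_snd t : snd (1 + RtoC t * w)%C = t * b.
Proof. unfold b. simpl. ring. Qed.

Lemma F_csum_eq t : csum (fun j => RtoC (cc j) * cpown (RtoC t * w) (S j))%C p
  = csum (fun j => RtoC (cc j * t ^ S j) * cpown w (S j))%C p.
Proof.
  apply csum_ext. intros k _. rewrite cpown_mult, cpown_R, RtoC_mult. ring.
Qed.

Lemma F_fst t : 0 < 1 + t * a -> fst (F t) = ReF t.
Proof.
  intros H. unfold F, ReF. rewrite fst_Cplus, F_csum_eq, fst_csum.
  f_equal.
  - unfold Clog. simpl fst. unfold Cmod. rewrite one_tw_fst, one_tw_snd. apply ln_sqrt'. apply Q_pos; auto.
  - apply rsum_ext. intros k _. rewrite fst_RtoCm. field. apply not_0_INR; lia.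
Qed.

Lemma F_snd t : 0 < 1 + t * a -> snd (F t) = ImF t.
Proof.
  intros H. unfold F, ImF. rewrite snd_Cplus, F_csum_eq, snd_csum.
  f_equal.
  - unfold Clog. simpl snd. rewrite Carg_rhp; rewrite one_tw_fst; auto. rewrite one_tw_snd. auto.
  - apply rsum_ext. intros k _. rewrite snd_RtoCm. field. apply not_0_INR; lia.
Qed.

Lemma one_tw_nz t : 0 < 1 + t * a -> (1 + RtoC t * w)%C <> RtoC 0.
Proof. intros H E. apply (f_equal fst) in E. rewrite one_tw_fst in E. simpl in E. lra. Qed.

Lemma ReF_deriv t : 0 < 1 + t * a -> is_derive ReF t (fst (DD t)).
Proof.
  intros H. pose proof (Q_pos t H) as HQ. unfold ReF.
  replace (fst (DD t)) with ((2 * a * (1 + t * a) + 2 * b * (t * b)) / Q t / 2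
                             + rsum (fun k => (cc k * INR (S k) * fst (cpown w (S k))) * t ^ k) p).
  apply (is_derive_plus (K := R_AbsRing) (V := R_NormedModule)).
  - unfold Q. auto_derive. unfold Q in HQ. lra. field. unfold Q in HQ. lra.
  - apply is_derive_poly.
  - unfold DD. rewrite fst_Cplus, fst_csum. f_equal.
    + unfold Q in *. destruct w as [a0 b0]. unfold a, b in *. simpl in *. field. lra.
    + apply rsum_ext. intros k _. rewrite fst_RtoCm. ring.
Qed.

Lemma ImF_deriv t : 0 < 1 + t * a -> is_derive ImF t (snd (DD t)).
Proof.
  intros H. pose proof (Q_pos t H) as HQ. unfold ImF.
  replace (snd (DD t)) with (b / Q t
                             + rsum (fun k => (cc k * INR (S k) * snd (cpown w (S k))) * t ^ k) p).
  apply (is_derive_plus (K := R_AbsRing) (V := R_NormedModule)).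
  - unfold Q. auto_derive. lra. unfold Q in HQ. field. split; lra.
  - apply is_derive_poly.
  - unfold DD. rewrite snd_Cplus, snd_csum. f_equal.
    + unfold Q in *. destruct w as [a0 b0]. unfold a, b in *. simpl in *. field. lra.
    + apply rsum_ext. intros k _. rewrite snd_RtoCm. ring.
Qed.

Lemma DD_bound t : 0 <= t <= 1 -> Cmod w <= 1/2 -> Cmod (DD t) <= 2 * Cmod w ^ S p.
Proof.
  intros Ht Hw. assert (Ha : Rabs a <= Cmod w) by apply re_le_Cmod.
  assert (Hp : 0 < 1 + t * a). { apply Rabs_le_between in Ha. destruct Ha. nra. }
  unfold DD. rewrite geom_DD by (apply one_tw_nz; auto).
  assert (Hnz := one_tw_nz t Hp).
  assert (Hm : 1/2 <= Cmod (1 + RtoC t * w)%C).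
  { assert (Cmod (RtoC 1) <= Cmod (1 + RtoC t * w)%C + Cmod (- (RtoC t * w))%C).
    { replace (RtoC 1) with ((1 + RtoC t * w) + - (RtoC t * w))%C at 1 by ring. apply Cmod_triangle. }
    rewrite Cmod_opp, Cmod_mult, !Cmod_R, Rabs_R1, (Rabs_pos_eq t) in H by lra.
    pose proof (Cmod_ge_0 w). nra. }
  rewrite Cmod_div by auto. rewrite Cmod_mult, Cmod_cpown, Cmod_opp, Cmod_mult, Cmod_R, Rabs_pos_eq by lra.
  pose proof (Cmod_ge_0 w).
  assert (Hle : (t * Cmod w) ^ p <= Cmod w ^ p). { apply pow_incr. split. nra. nra. }
  simpl pow at 2. apply Rmult_le_reg_r with (Cmod (1 + RtoC t * w)%C). lra.
  unfold Rdiv. rewrite Rmult_assoc, Rinv_l by lra.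
  assert (0 <= Cmod w ^ p) by (apply pow_le; auto).
  assert (Cmod w * (t * Cmod w) ^ p <= Cmod w * Cmod w ^ p) by (apply Rmult_le_compat_l; auto).
  assert (0 <= Cmod w * Cmod w ^ p) by (apply Rmult_le_pos; auto).
  assert (Cmod w * Cmod w ^ p <= 2 * (Cmod w * Cmod w ^ p) * Cmod (1 + RtoC t * w)%C) by nra.
  lra.
Qed.

Lemma snd_le_Cmod z : Rabs (snd z) <= Cmod z.
Proof. eapply Rle_trans; [apply Rmax_r|apply Rmax_Cmod]. Qed.

Lemma log_taylor_F : Cmod w <= 1/2 -> Cmod (F 1) <= 4 * Cmod w ^ S p.
Proof.
  intros Hw. assert (Ha : Rabs a <= Cmod w) by apply re_le_Cmod.
  assert (Hp : forall t, -1/2 < t < 3/2 -> 0 < 1 + t * a).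
  { intros t Ht. apply Rabs_le_between in Ha. destruct Ha. nra. }
  assert (HR0 : ReF 0 = 0).
  { unfold ReF, Q. replace ((1 + 0 * a) ^ 2 + (0 * b) ^ 2) with 1 by ring. rewrite ln_1.
    generalize p. intros n; induction n; cbn [rsum]. lra. rewrite pow_i by lia. lra. }
  assert (HI0 : ImF 0 = 0).
  { unfold ImF. replace (0 * b / (1 + 0 * a)) with 0 by (field; lra). rewrite atan_0.
    generalize p. intros n; induction n; cbn [rsum]. lra. rewrite pow_i by lia. lra. }
  destruct (MVT_gen ReF 0 1 (fun t => fst (DD t))) as [x1 [Hx1 E1]].
  { intros x Hx. rewrite Rmin_left, Rmax_right in Hx by lra. apply ReF_deriv, Hp; lra. }
  { intros x Hx. rewrite Rmin_left, Rmax_right in Hx by lra.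
    apply continuity_pt_filterlim. apply (ex_derive_continuous (K := R_AbsRing) (V := R_NormedModule)).
    eexists; apply ReF_deriv, Hp; lra. }
  destruct (MVT_gen ImF 0 1 (fun t => snd (DD t))) as [x2 [Hx2 E2]].
  { intros x Hx. rewrite Rmin_left, Rmax_right in Hx by lra. apply ImF_deriv, Hp; lra. }
  { intros x Hx. rewrite Rmin_left, Rmax_right in Hx by lra.
    apply continuity_pt_filterlim. apply (ex_derive_continuous (K := R_AbsRing) (V := R_NormedModule)).
    eexists; apply ImF_deriv, Hp; lra. }
  rewrite Rmin_left, Rmax_right in Hx1, Hx2 by lra.
  rewrite HR0 in E1. rewrite HI0 in E2.
  eapply Rle_trans. apply Cmod_le_sum.
  rewrite F_fst, F_snd by (apply Hp; lra).
  replace (ReF 1) with (fst (DD x1)) by lra. replace (ImF 1) with (snd (DD x2)) by lra.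
  pose proof (DD_bound x1 Hx1 Hw). pose proof (DD_bound x2 Hx2 Hw).
  pose proof (re_le_Cmod (DD x1)). pose proof (snd_le_Cmod (DD x2)). unfold Re in *. lra.
Qed.

End LogTaylor.

Lemma log_taylor (w : C) p : Cmod w <= 1/2 ->
  Cmod (Clog (RtoC 1 + w) + csum (fun j => RtoC ((-1) ^ (S j) / INR (S j)) * cpown w (S j)) p)%C
  <= 4 * Cmod w ^ S p.
Proof.
  intros Hw. pose proof (log_taylor_F w p Hw). simpl in H.
  replace (RtoC 1 * w)%C with w in H by ring. exact H.
Qed.

Definition lgterm (Sq : nat -> C) (g : nat) (z : C) (n : nat) : C :=
  (Clog (RtoC 1 + z / Sq n) +
   csum (fun j => RtoC ((-1) ^ (S j) / INR (S j)) * cpown (z / Sq n) (S j)) g)%C.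

Lemma logGamma_lg z Sq : logGamma z Sq = (- CSeries (lgterm Sq (genus Sq) z))%C.
Proof. reflexivity. Qed.

Lemma ex_series_R_le (a b : nat -> R) N :
  (forall n, (N <= n)%nat -> Rabs (a n) <= b n) -> ex_series b -> ex_series a.
Proof.
  intros H Hb. apply (ex_series_incr_n a N). apply (ex_series_incr_n b N) in Hb.
  eapply (ex_series_le (K := R_AbsRing) (V := R_CompleteNormedModule)); [|exact Hb].
  intros n. apply H. lia.
Qed.

Lemma pow_lt_S x y n : 0 <= x < y -> x ^ S n < y ^ S n.
Proof.
  intros H. induction n. simpl. lra.
  change (x * x ^ S n < y * y ^ S n).
  assert (0 <= x ^ S n) by (apply pow_le; lra). nra.
Qed.

Lemma eventually_large (Sq : nat -> C) p M :
  ex_series (fun n => / Cmod (Sq n) ^ S p) -> (forall n, Sq n <> RtoC 0) -> 0 < M ->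
  exists N, forall n, (N <= n)%nat -> M <= Cmod (Sq n).
Proof.
  intros Hs Hnz HM. apply ex_series_lim_0 in Hs. apply is_lim_seq_spec in Hs.
  assert (Hp : 0 < / M ^ S p) by (apply Rinv_0_lt_compat, pow_lt; auto).
  destruct (Hs (mkposreal _ Hp)) as [N HN]. exists N. intros n Hn.
  specialize (HN n Hn). cbn [pos] in HN. rewrite Rminus_0_r in HN.
  destruct (Rle_lt_dec M (Cmod (Sq n))) as [|Hlt]; auto. exfalso.
  assert (0 < Cmod (Sq n)). { destruct (Cmod_ge_0 (Sq n)); auto. exfalso. apply (Hnz n). apply Cmod_eq_0; auto. }
  assert (Cmod (Sq n) ^ S p < M ^ S p) by (apply pow_lt_S; lra).
  assert (/ M ^ S p < / Cmod (Sq n) ^ S p) by (apply Rinv_lt_contravar; auto; apply Rmult_lt_0_compat; apply pow_lt; auto).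
  rewrite Rabs_pos_eq in HN. lra. apply Rlt_le, Rinv_0_lt_compat, pow_lt; auto.
Qed.

Lemma lg_conv (Sq : nat -> C) p z :
  (forall n, Sq n <> RtoC 0) -> ex_series (fun n => / Cmod (Sq n) ^ S p) ->
  ex_series (fun n => fst (lgterm Sq p z n)) /\ ex_series (fun n => snd (lgterm Sq p z n)).
Proof.
  intros Hnz Hs.
  destruct (eventually_large Sq p (2 * Cmod z + 1) Hs Hnz) as [N HN].
  pose proof (Cmod_ge_0 z); lra.
  assert (Hb : forall n, (N <= n)%nat -> Cmod (lgterm Sq p z n) <= 4 * Cmod z ^ S p * / Cmod (Sq n) ^ S p).
  { intros n Hn. specialize (HN n Hn). pose proof (Cmod_ge_0 z).
    assert (0 < Cmod (Sq n)) by lra.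
    assert (Hw : Cmod (z / Sq n)%C <= 1/2).
    { rewrite Cmod_div by auto. apply Rmult_le_reg_r with (Cmod (Sq n)); auto.
      unfold Rdiv. rewrite Rmult_assoc, Rinv_l by lra. lra. }
    eapply Rle_trans. apply log_taylor; auto.
    rewrite Cmod_div by auto. unfold Rdiv. rewrite Rpow_mult_distr, pow_inv. lra. }
  assert (Hs' : ex_series (fun n => 4 * Cmod z ^ S p * / Cmod (Sq n) ^ S p)).
  { apply (ex_series_scal_l (K := R_AbsRing) (V := R_NormedModule) (4 * Cmod z ^ S p)) in Hs. exact Hs. }
  split; apply (ex_series_R_le _ (fun n => 4 * Cmod z ^ S p * / Cmod (Sq n) ^ S p) N); auto;
    intros n Hn; eapply Rle_trans; try apply Hb; auto.
  apply re_le_Cmod. apply snd_le_Cmod.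
Qed.

Lemma is_genus_unique Sq p q : is_genus Sq p -> is_genus Sq q -> p = q.
Proof.
  intros [H1 H2] [H3 H4]. destruct (Nat.lt_total p q) as [Hl|[E|Hl]]; auto.
  - exfalso. apply (H4 p Hl H1).
  - exfalso. apply (H2 q Hl H3).
Qed.

Lemma genus_eq Sq p : is_genus Sq p -> genus Sq = p.
Proof.
  intros H. unfold genus. apply (is_genus_unique Sq); auto.
  apply epsilon_spec. eauto.
Qed.

Lemma Cmod_shift (l : R) (m : C) : 0 < l -> 0 <= fst m -> Cmod m <= Cmod (RtoC l + m)%C.
Proof.
  intros Hl Hm. unfold Cmod. apply sqrt_le_1_alt. simpl.
  pose proof (pow2_ge_0 (snd m)). nra.
Qed.

Lemma Cmod_shift_up (l : R) (m : C) : 0 < l -> Cmod (RtoC l + m)%C <= l + Cmod m.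
Proof.
  intros Hl. eapply Rle_trans. apply Cmod_triangle. rewrite Cmod_R, Rabs_pos_eq; lra.
Qed.

Lemma inv_pow_le A B n : 0 < A <= B -> / B ^ n <= / A ^ n.
Proof.
  intros H. apply Rinv_le_contravar. apply pow_lt; lra. apply pow_incr; lra.
Qed.

Lemma Cmod_pos_nz z : z <> RtoC 0 -> 0 < Cmod z.
Proof. intros H. destruct (Cmod_ge_0 z); auto. exfalso; apply H, Cmod_eq_0; auto. Qed.

Lemma St_nz (l : R) (m : C) : 0 < l -> 0 < fst m -> ((RtoC l + m) / RtoC l)%C <> RtoC 0.
Proof.
  intros Hl Hm E. assert (fst ((RtoC l + m) / RtoC l * RtoC l)%C = 0).
  rewrite E. simpl. ring. replace ((RtoC l + m) / RtoC l * RtoC l)%C with (RtoC l + m)%C in H.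
  simpl in H. lra. field. intros E'. apply (f_equal fst) in E'. simpl in E'. lra.
Qed.

Lemma Cmod_St (l : R) (m : C) : 0 < l -> Cmod ((RtoC l + m) / RtoC l)%C = Cmod (RtoC l + m)%C / l.
Proof.
  intros Hl. rewrite Cmod_div. rewrite Cmod_R, Rabs_pos_eq; lra.
  intros E'. apply (f_equal fst) in E'. simpl in E'. lra.
Qed.

Lemma genus_St (l : R) (S2 : nat -> C) p : 0 < l ->
  (forall n, 0 < fst (S2 n)) -> (forall n, Cmod (S2 n) <= Cmod (S2 (S n))) ->
  is_genus S2 p -> is_genus (fun n => ((RtoC l + S2 n) / RtoC l)%C) p.
Proof.
  intros Hl Hre Hmono [Hc Hd].
  assert (Hnz : forall n, S2 n <> RtoC 0).
  { intros n E. specialize (Hre n). rewrite E in Hre. simpl in Hre. lra. }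
  assert (Hm0 : forall n, Cmod (S2 0%nat) <= Cmod (S2 n)).
  { induction n. lra. eapply Rle_trans; eauto. }
  assert (Hpos0 : 0 < Cmod (S2 0%nat)) by (apply Cmod_pos_nz; auto).
  split.
  - eapply (ex_series_le (K := R_AbsRing) (V := R_CompleteNormedModule)).
    2:{ apply (ex_series_scal_l (K := R_AbsRing) (V := R_NormedModule) (l ^ S p)) in Hc. exact Hc. }
    intros n. change (scal (l ^ S p) (/ Cmod (S2 n) ^ S p)) with (l ^ S p * / Cmod (S2 n) ^ S p).
    change (norm (/ Cmod ((RtoC l + S2 n) / RtoC l)%C ^ S p)) with (Rabs (/ Cmod ((RtoC l + S2 n) / RtoC l)%C ^ S p)).
    rewrite Cmod_St by auto.
    assert (H1 : Cmod (S2 n) <= Cmod (RtoC l + S2 n)%C) by (apply Cmod_shift; auto; apply Rlt_le; auto).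
    pose proof (Cmod_pos_nz _ (Hnz n)).
    assert (Hp : 0 < / (Cmod (RtoC l + S2 n)%C / l) ^ S p).
    { apply Rinv_0_lt_compat, pow_lt. apply Rdiv_lt_0_compat; lra. }
    rewrite Rabs_pos_eq by lra.
    unfold Rdiv. rewrite Rpow_mult_distr, pow_inv, Rinv_mult, Rinv_inv.
    rewrite Rmult_comm. apply Rmult_le_compat_l. apply pow_le; lra.
    apply inv_pow_le. lra.
  - intros q Hq Hex. apply (Hd q Hq).
    set (K := (l / Cmod (S2 0%nat) + 1) / l).
    assert (HK : 0 < K) by (unfold K; apply Rdiv_lt_0_compat; [apply Rplus_lt_0_compat; [apply Rdiv_lt_0_compat|]|]; lra).
    eapply (ex_series_le (K := R_AbsRing) (V := R_CompleteNormedModule)).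
    2:{ apply (ex_series_scal_l (K := R_AbsRing) (V := R_NormedModule) (K ^ S q)) in Hex. exact Hex. }
    intros n. change (scal (K ^ S q) (/ Cmod ((RtoC l + S2 n) / RtoC l)%C ^ S q))
      with (K ^ S q * / Cmod ((RtoC l + S2 n) / RtoC l)%C ^ S q).
    change (norm (/ Cmod (S2 n) ^ S q)) with (Rabs (/ Cmod (S2 n) ^ S q)).
    pose proof (Cmod_pos_nz _ (Hnz n)). specialize (Hm0 n).
    rewrite Rabs_pos_eq by (apply Rlt_le, Rinv_0_lt_compat, pow_lt; lra).
    rewrite Cmod_St by auto.
    assert (H2 : Cmod (RtoC l + S2 n)%C / l <= K * Cmod (S2 n)).
    { pose proof (Cmod_shift_up l (S2 n) Hl). unfold K.
      apply Rmult_le_reg_r with l; auto. unfold Rdiv.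
      replace (Cmod (RtoC l + S2 n)%C * / l * l) with (Cmod (RtoC l + S2 n)%C) by (field; lra).
      replace ((l * / Cmod (S2 0%nat) + 1) * / l * Cmod (S2 n) * l) with
        (l * (Cmod (S2 n) / Cmod (S2 0%nat)) + Cmod (S2 n)) by (field; lra).
      assert (1 <= Cmod (S2 n) / Cmod (S2 0%nat)).
      { apply Rmult_le_reg_r with (Cmod (S2 0%nat)); auto. unfold Rdiv.
        rewrite Rmult_assoc, Rinv_l by lra. lra. }
      nra. }
    assert (H3 : 0 < Cmod (RtoC l + S2 n)%C / l).
    { apply Rdiv_lt_0_compat; auto. pose proof (Cmod_shift l (S2 n) Hl (Rlt_le _ _ (Hre n))). lra. }
    match goal with |- context [scal ?a ?b] => change (scal a b) with (a * b) end.
    replace (K ^ S q * / (Cmod (RtoC l + S2 n)%C / l) ^ S q) with (/ ((Cmod (RtoC l + S2 n)%C / l) / K) ^ S q).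
    apply inv_pow_le. split. apply Rdiv_lt_0_compat; auto.
    apply Rmult_le_reg_r with K; auto. unfold Rdiv. rewrite Rmult_assoc, Rinv_l by lra. lra.
    unfold Rdiv at 1. rewrite Rpow_mult_distr, pow_inv, Rinv_mult, Rinv_inv. ring.
Qed.

Definition CPoly (q : nat) (f : R -> C) : Prop :=
  exists d : nat -> C, forall x, f x = csum (fun k => d k * RtoC (x ^ k))%C (S q).

Lemma CPoly_const c : CPoly 0 (fun _ => c).
Proof. exists (fun _ => c). intros x; simpl. ring. Qed.

Lemma CPoly_mono q q' f : (q <= q')%nat -> CPoly q f -> CPoly q' f.
Proof.
  intros Hq [d Hd]. exists (fun k => if (k <=? q)%nat then d k else RtoC 0).
  intros x. rewrite Hd. clear Hd. induction Hq.
  - apply csum_ext. intros k Hk. replace (k <=? q)%nat with true. auto. symmetry; apply Nat.leb_le; lia.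
  - rewrite IHHq. cbn [csum]. replace (S m <=? q)%nat with false. ring. symmetry; apply Nat.leb_gt; lia.
Qed.

Lemma CPoly_plus q f g : CPoly q f -> CPoly q g -> CPoly q (fun x => f x + g x)%C.
Proof.
  intros [d Hd] [e He]. exists (fun k => d k + e k)%C. intros x. rewrite Hd, He.
  generalize (S q). induction n; cbn [csum]. ring. rewrite <- IHn. ring.
Qed.

Lemma CPoly_scal q c f : CPoly q f -> CPoly q (fun x => c * f x)%C.
Proof.
  intros [d Hd]. exists (fun k => c * d k)%C. intros x. rewrite Hd.
  generalize (S q). induction n; cbn [csum]. ring. rewrite <- IHn. ring.
Qed.

Lemma CPoly_xmul q f : CPoly q f -> CPoly (S q) (fun x => RtoC x * f x)%C.
Proof.
  intros [d Hd]. exists (fun k => match k with O => RtoC 0 | S k' => d k' end). intros x. rewrite Hd.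
  generalize (S q). induction n; cbn [csum]. simpl. ring.
  rewrite Cmult_plus_distr_l, IHn. cbn [csum]. simpl pow. rewrite RtoC_mult. ring.
Qed.

Lemma CPoly_ext q f g : (forall x, f x = g x) -> CPoly q f -> CPoly q g.
Proof. intros E [d Hd]. exists d. intros x. rewrite <- E. auto. Qed.

Lemma CPoly_csum q (f : nat -> R -> C) n : (forall k, (k < n)%nat -> CPoly q (f k)) -> CPoly q (fun x => csum (fun k => f k x) n).
Proof.
  intros H. induction n; cbn [csum].
  - apply (CPoly_mono 0); [lia|apply (CPoly_const (RtoC 0))].
  - apply CPoly_plus; auto.
Qed.

Lemma CPoly_xpow m : CPoly m (fun x => cpown (RtoC x) m).
Proof.
  induction m. apply CPoly_ext with (fun _ => RtoC 1). auto. apply CPoly_const.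
  apply CPoly_xmul in IHm. exact IHm.
Qed.

Lemma CPoly_onepow m : CPoly m (fun x => cpown (RtoC (1 + x)) m).
Proof.
  induction m. apply CPoly_ext with (fun _ => RtoC 1). auto. apply CPoly_const.
  apply CPoly_ext with (fun x => cpown (RtoC (1 + x)) m + RtoC x * cpown (RtoC (1 + x)) m)%C.
  intros x. simpl cpown. rewrite RtoC_plus. ring.
  apply CPoly_plus. apply (CPoly_mono m); auto. apply CPoly_xmul; auto.
Qed.

Fixpoint hdiv (x0 x : R) (k : nat) : R :=
  match k with O => 0 | S j => x ^ j + x0 * hdiv x0 x j end.

Lemma hdiv_eq x0 x k : x ^ k - x0 ^ k = (x - x0) * hdiv x0 x k.
Proof. induction k; simpl. ring. replace (x * x ^ k - x0 * x0 ^ k) with (x * x ^ k - x0 * x ^ k + x0 * (x ^ k - x0 ^ k)) by ring.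
  rewrite IHk. ring. Qed.

Lemma CPoly_hdiv x0 k : CPoly k (fun x => RtoC (hdiv x0 x (S k))).
Proof.
  induction k.
  - apply CPoly_ext with (fun _ => RtoC 1). intros; simpl; f_equal; ring. apply CPoly_const.
  - apply CPoly_ext with (fun x => cpown (RtoC x) (S k) + RtoC x0 * RtoC (hdiv x0 x (S k)))%C.
    intros x. change (hdiv x0 x (S (S k))) with (x ^ S k + x0 * hdiv x0 x (S k)).
    rewrite cpown_R, RtoC_plus, RtoC_mult. reflexivity.
    apply CPoly_plus. apply CPoly_xpow. apply CPoly_scal. apply (CPoly_mono k); auto.
Qed.

Lemma CPoly_div q f x0 : CPoly (S q) f ->
  exists g, CPoly q g /\ forall x, f x = (f x0 + (RtoC x - RtoC x0) * g x)%C.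
Proof.
  intros [d Hd]. exists (fun x => csum (fun k => d k * RtoC (hdiv x0 x k))%C (S (S q))).
  split.
  - apply CPoly_csum. intros k Hk. apply CPoly_scal. destruct k.
    + apply (CPoly_mono 0); [lia|apply (CPoly_const (RtoC 0))].
    + apply (CPoly_mono k); [lia|]. apply CPoly_hdiv.
  - intros x. rewrite !Hd. generalize (S (S q)). induction n; cbn [csum]. ring.
    rewrite IHn. rewrite <- RtoC_minus.
    replace (RtoC (x ^ n)) with (RtoC (x0 ^ n) + RtoC (x - x0) * RtoC (hdiv x0 x n))%C.
    ring. rewrite <- RtoC_mult, <- hdiv_eq, <- RtoC_plus. f_equal. ring.
Qed.

Definition exC (u : nat -> C) : Prop :=
  ex_series (fun n => fst (u n)) /\ ex_series (fun n => snd (u n)).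

Lemma CSeries_ext u v : (forall n, u n = v n) -> CSeries u = CSeries v.
Proof. intros H. unfold CSeries. f_equal; apply Series_ext; intros; rewrite H; auto. Qed.

Lemma exC_ext u v : (forall n, u n = v n) -> exC u -> exC v.
Proof.
  intros H [H1 H2]. split.
  - eapply (ex_series_ext (K := R_AbsRing) (V := R_NormedModule)); [|exact H1]. intros n; simpl; rewrite H; auto.
  - eapply (ex_series_ext (K := R_AbsRing) (V := R_NormedModule)); [|exact H2]. intros n; simpl; rewrite H; auto.
Qed.

Lemma exC_plus u v : exC u -> exC v -> exC (fun n => u n + v n)%C.
Proof.
  intros [H1 H2] [H3 H4]. split.
  - apply (ex_series_plus (K := R_AbsRing) (V := R_NormedModule) _ _ H1 H3).
  - apply (ex_series_plus (K := R_AbsRing) (V := R_NormedModule) _ _ H2 H4).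
Qed.

Lemma exC_scalR (r : R) u : exC u -> exC (fun n => RtoC r * u n)%C.
Proof.
  intros [H1 H2]. split.
  - eapply (ex_series_ext (K := R_AbsRing) (V := R_NormedModule)).
    2: apply (ex_series_scal_l (K := R_AbsRing) (V := R_NormedModule) r _ H1).
    intros n. simpl. change (scal r (fst (u n))) with (r * fst (u n)). ring.
  - eapply (ex_series_ext (K := R_AbsRing) (V := R_NormedModule)).
    2: apply (ex_series_scal_l (K := R_AbsRing) (V := R_NormedModule) r _ H2).
    intros n. simpl. change (scal r (snd (u n))) with (r * snd (u n)). ring.
Qed.

Lemma exC_minus u v : exC u -> exC v -> exC (fun n => u n - v n)%C.
Proof.
  intros Hu Hv. apply exC_plus; auto.
  eapply exC_ext; [|apply (exC_scalR (-1) v Hv)]. intros n; simpl. ring.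
Qed.

Lemma CSeries_plus u v : exC u -> exC v -> CSeries (fun n => u n + v n)%C = (CSeries u + CSeries v)%C.
Proof.
  intros [H1 H2] [H3 H4]. unfold CSeries. apply injective_projections; simpl.
  - rewrite <- (Series_plus _ _ H1 H3). reflexivity.
  - rewrite <- (Series_plus _ _ H2 H4). reflexivity.
Qed.

Lemma CSeries_scalR (r : R) u : CSeries (fun n => RtoC r * u n)%C = (RtoC r * CSeries u)%C.
Proof.
  unfold CSeries. apply injective_projections; simpl.
  - replace (r * Series (fun n => fst (u n)) - 0 * Series (fun n => snd (u n))) with (Series (fun n => r * fst (u n))) by (rewrite Series_scal_l; ring). apply Series_ext. intros; ring.
  - replace (r * Series (fun n => snd (u n)) + 0 * Series (fun n => fst (u n))) with (Series (fun n => r * snd (u n))) by (rewrite Series_scal_l; ring). apply Series_ext. intros; ring.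
Qed.

Lemma CSeries_minus u v : exC u -> exC v -> CSeries (fun n => u n - v n)%C = (CSeries u - CSeries v)%C.
Proof.
  intros Hu Hv.
  rewrite (CSeries_ext (fun n => u n - v n)%C (fun n => u n + RtoC (-1) * v n)%C) by (intros; apply injective_projections; simpl; ring).
  rewrite CSeries_plus; auto. rewrite CSeries_scalR. apply injective_projections; simpl; ring.
  apply exC_scalR; auto.
Qed.

Lemma series_poly : forall q (f : nat -> R -> C), (forall n, CPoly q (f n)) ->
  forall M, (forall x, M < x -> exC (fun n => f n x)) ->
  exists P M', CPoly q P /\ forall x, M' < x -> CSeries (fun n => f n x) = P x.
Proof.
  induction q as [|q IH]; intros f Hf M Hex.
  - exists (fun _ => CSeries (fun n => f n (M + 1))), M. split. apply CPoly_const.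
    intros x Hx. apply CSeries_ext. intros n. destruct (Hf n) as [d Hd]. rewrite !Hd. simpl. ring.
  - set (x0 := M + 1).
    assert (Hg : forall n, {g | CPoly q g /\ forall x, f n x = (f n x0 + (RtoC x - RtoC x0) * g x)%C}).
    { intros n. apply constructive_indefinite_description. apply CPoly_div; auto. }
    set (g := fun n => proj1_sig (Hg n)).
    assert (Hg1 : forall n, CPoly q (g n)) by (intros n; unfold g; destruct (Hg n); simpl; tauto).
    assert (Hg2 : forall n x, f n x = (f n x0 + (RtoC x - RtoC x0) * g n x)%C)
      by (intros n; unfold g; destruct (Hg n); simpl; tauto).
    assert (Hgx : forall n x, x0 < x -> g n x = (RtoC (/ (x - x0)) * (f n x - f n x0))%C).
    { intros n x Hx. rewrite (Hg2 n x). rewrite <- RtoC_minus.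
      replace (RtoC (/ (x - x0))) with (/ RtoC (x - x0))%C. field.
      intros E; apply (f_equal fst) in E; simpl in E; lra.
      apply injective_projections; simpl; field; lra. }
    destruct (IH g Hg1 x0) as [P [M' [HP HM']]].
    { intros x Hx. eapply exC_ext. intros n; symmetry; apply Hgx; auto.
      apply exC_scalR. apply exC_minus; apply Hex; unfold x0 in *; lra. }
    exists (fun x => CSeries (fun n => f n x0) + (RtoC x - RtoC x0) * P x)%C, (Rmax M' x0).
    split.
    + apply CPoly_plus. apply (CPoly_mono 0); [lia|apply CPoly_const].
      apply CPoly_ext with (fun x => RtoC x * P x + RtoC (- x0) * P x)%C.
      intros x. rewrite RtoC_opp. ring.
      apply CPoly_plus. apply CPoly_xmul; auto. apply (CPoly_mono q); auto. apply CPoly_scal; auto.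
    + intros x Hx. assert (x0 < x) by (eapply Rle_lt_trans; [apply Rmax_r|exact Hx]).
      assert (M' < x) by (eapply Rle_lt_trans; [apply Rmax_l|exact Hx]).
      rewrite (CSeries_ext _ (fun n => f n x0 + RtoC (x - x0) * g n x)%C).
      rewrite CSeries_plus, CSeries_scalR, HM', RtoC_minus; auto.
      apply Hex; unfold x0; lra.
      apply exC_scalR. eapply exC_ext. intros n; symmetry; apply Hgx; auto.
      apply exC_scalR. apply exC_minus; apply Hex; unfold x0 in *; lra.
      intros n. rewrite (Hg2 n x) at 1. rewrite RtoC_minus. reflexivity.
Qed.

Lemma fst_one_div (r : R) (z : C) : 0 <= r -> 0 < fst z -> 1 <= fst (RtoC 1 + RtoC r / z)%C.
Proof.
  intros Hr Hz. destruct z as [a b]. simpl in *.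
  assert (0 < a * (a * 1) + b * (b * 1)) by nra.
  assert (0 <= r * (a / (a * (a * 1) + b * (b * 1)))) by (apply Rmult_le_pos; auto; apply Rdiv_le_0_compat; lra).
  lra.
Qed.

Definition Pp (p : nat) (w : C) : C :=
  csum (fun j => RtoC ((-1) ^ (S j) / INR (S j)) * cpown w (S j))%C p.

Section Ident.
Variable l : R.
Variable S2 : nat -> C.
Variable p : nat.
Hypothesis Hl : 0 < l.
Hypothesis Hre : forall n, 0 < fst (S2 n).
Hypothesis Hmono : forall n, Cmod (S2 n) <= Cmod (S2 (S n)).
Hypothesis Hg : is_genus S2 p.

Let St := fun n => ((RtoC l + S2 n) / RtoC l)%C.

Lemma S2_nz n : S2 n <> RtoC 0.
Proof. intros E. specialize (Hre n). rewrite E in Hre. simpl in Hre. lra. Qed.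

Lemma Cl_nz : RtoC l <> RtoC 0.
Proof. intros E; apply (f_equal fst) in E; simpl in E; lra. Qed.

Lemma lmu_nz n : (RtoC l + S2 n)%C <> RtoC 0.
Proof. intros E; apply (f_equal fst) in E; simpl in E. specialize (Hre n). lra. Qed.

Lemma St_eq n : St n = (RtoC (/ l) * (RtoC l + S2 n))%C.
Proof. unfold St. rewrite RtoC_inv by lra. field. apply Cl_nz. Qed.

Lemma St_fst n : 0 < fst (St n).
Proof.
  rewrite St_eq, fst_RtoCm. simpl. specialize (Hre n).
  apply Rmult_lt_0_compat. apply Rinv_0_lt_compat; auto. lra.
Qed.

Lemma Stn_nz n : St n <> RtoC 0.
Proof. intros E. pose proof (St_fst n). rewrite E in H. simpl in H. lra. Qed.

Lemma clog_split x n : 0 <= x ->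
  Clog (RtoC 1 + RtoC (l * (1 + x)) / S2 n)%C =
  (Clog (RtoC 1 + RtoC l / S2 n) + Clog (RtoC 1 + RtoC x / St n))%C.
Proof.
  intros Hx.
  assert (E : (RtoC 1 + RtoC (l * (1 + x)) / S2 n)%C =
              ((RtoC 1 + RtoC l / S2 n) * (RtoC 1 + RtoC x / St n))%C).
  { unfold St. rewrite RtoC_mult, RtoC_plus. field. repeat split; first [apply lmu_nz | apply Cl_nz | apply S2_nz]. }
  rewrite E. apply Clog_mult.
  - pose proof (fst_one_div l (S2 n) (Rlt_le _ _ Hl) (Hre n)). lra.
  - pose proof (fst_one_div x (St n) Hx (St_fst n)). lra.
  - rewrite <- E. pose proof (fst_one_div (l * (1 + x)) (S2 n) ltac:(nra) (Hre n)). lra.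
Qed.

Definition Dn (n : nat) (x : R) : C :=
  (Pp p (RtoC (l * (1 + x)) / S2 n) - Pp p (RtoC l / S2 n) - Pp p (RtoC x / St n))%C.

Lemma term_split x n : 0 <= x ->
  lgterm St p (RtoC x) n =
  (lgterm S2 p (RtoC (l * (1 + x))) n - lgterm S2 p (RtoC l) n - Dn n x)%C.
Proof.
  intros Hx. unfold lgterm, Dn, Pp. rewrite clog_split by auto. ring.
Qed.

Lemma genus_S2 : genus S2 = p.
Proof. apply genus_eq; auto. Qed.

Lemma genus_St' : genus St = p.
Proof. apply genus_eq. apply genus_St; auto. Qed.

Lemma exC_lg (Sq : nat -> C) z : (forall n, Sq n <> RtoC 0) -> ex_series (fun n => / Cmod (Sq n) ^ S p) ->
  exC (lgterm Sq p z).
Proof. intros H1 H2. destruct (lg_conv Sq p z H1 H2). split; auto. Qed.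

Lemma exC_S2 z : exC (lgterm S2 p z).
Proof. apply exC_lg. apply S2_nz. destruct Hg; auto. Qed.

Lemma exC_St z : exC (lgterm St p z).
Proof. apply exC_lg. apply Stn_nz. destruct (genus_St l S2 p Hl Hre Hmono Hg); auto. Qed.

Lemma exC_Dn x : 0 <= x -> exC (fun n => Dn n x).
Proof.
  intros Hx. eapply exC_ext.
  2:{ apply exC_minus. apply exC_minus. apply (exC_S2 (RtoC (l * (1 + x)))). apply (exC_S2 (RtoC l)).
      apply (exC_St (RtoC x)). }
  intros n. simpl. rewrite term_split by auto. ring.
Qed.

Lemma logGamma_split x : 0 <= x ->
  logGamma (RtoC x) St =
  (logGamma (RtoC (l * (1 + x))) S2 - logGamma (RtoC l) S2 + CSeries (fun n => Dn n x))%C.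
Proof.
  intros Hx. rewrite !logGamma_lg, genus_S2, genus_St'.
  rewrite (CSeries_ext _ (fun n => lgterm S2 p (RtoC (l * (1 + x))) n - lgterm S2 p (RtoC l) n - Dn n x)%C)
    by (intros; apply term_split; auto).
  rewrite CSeries_minus, CSeries_minus. ring.
  apply exC_S2. apply exC_S2. apply exC_minus; apply exC_S2. apply exC_Dn; auto.
Qed.

Lemma CPoly_Pp (c : C) (h : R -> C) m :
  (forall j, (j < p)%nat -> CPoly m (fun x => cpown (h x) (S j))) ->
  CPoly m (fun x => Pp p (h x)).
Proof.
  intros H. unfold Pp. apply CPoly_csum. intros k Hk. apply CPoly_scal. auto.
Qed.

Lemma CPoly_Dn n : CPoly p (Dn n).
Proof.
  unfold Dn. apply CPoly_plus. apply CPoly_plus.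
  - apply CPoly_Pp; auto. intros j Hj.
    apply CPoly_ext with (fun x => cpown (RtoC l / S2 n) (S j) * cpown (RtoC (1 + x)) (S j))%C.
    intros x. rewrite <- cpown_mult. f_equal. rewrite RtoC_mult. field. apply S2_nz.
    apply CPoly_scal. apply (CPoly_mono (S j)); [lia|]. apply CPoly_onepow.
  - apply (CPoly_mono 0); [lia|]. apply CPoly_ext with (fun _ => (- Pp p (RtoC l / S2 n))%C).
    intros; reflexivity. apply CPoly_const.
  - apply CPoly_ext with (fun x => RtoC (-1) * Pp p (RtoC x / St n))%C.
    intros; apply injective_projections; simpl; ring.
    apply CPoly_scal. apply CPoly_Pp; auto. intros j Hj.
    apply CPoly_ext with (fun x => cpown (/ St n) (S j) * cpown (RtoC x) (S j))%C.
    intros x. rewrite <- cpown_mult. f_equal. field. apply Stn_nz.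
    apply CPoly_scal. apply (CPoly_mono (S j)); [lia|]. apply CPoly_xpow.
Qed.

Lemma Dn_0 n : Dn n 0 = RtoC 0.
Proof.
  unfold Dn. replace (l * (1 + 0)) with l by ring.
  replace (RtoC 0 / St n)%C with (RtoC 0) by (field; apply Stn_nz).
  assert (Pp p (RtoC 0) = RtoC 0).
  { unfold Pp. rewrite (csum_ext _ (fun _ => RtoC 0)). apply csum_const0. intros k _. simpl. ring. }
  rewrite H. ring.
Qed.

Lemma HasExp_Dsum : HasExp (fun x => CSeries (fun n => Dn n x)) 0 0.
Proof.
  assert (HE : forall n, {E | CPoly p E /\ forall x, Dn n x = (Dn n 0 + (RtoC x - RtoC 0) * E x)%C}).
  { intros n. apply constructive_indefinite_description. apply CPoly_div.
    apply (CPoly_mono p); [lia|]. apply CPoly_Dn. }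
  set (E := fun n => proj1_sig (HE n)).
  assert (HE1 : forall n, CPoly p (E n)) by (intros n; unfold E; destruct (HE n); simpl; tauto).
  assert (HE2 : forall n x, Dn n x = (RtoC x * E n x)%C).
  { intros n x. unfold E; destruct (HE n) as [e [Hc He]]; simpl. rewrite He, Dn_0.
    replace (RtoC x - RtoC 0)%C with (RtoC x) by (apply injective_projections; simpl; ring). ring. }
  destruct (series_poly p E HE1 0) as [P [M' [HP HM']]].
  { intros x Hx. eapply exC_ext. 2: apply (exC_scalR (/ x) _ (exC_Dn x (Rlt_le _ _ Hx))).
    intros n. cbv beta. rewrite HE2. rewrite Cmult_assoc, <- RtoC_mult, Rinv_l by lra. ring. }
  destruct HP as [d Hd].
  eapply HasExp_ext; [|apply (HasExp_poly0 d (S p))]. instantiate (1 := Rmax M' 0).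
  intros x Hx. assert (M' < x) by (eapply Rle_lt_trans; [apply Rmax_l|exact Hx]).
  assert (0 < x) by (eapply Rle_lt_trans; [apply Rmax_r|exact Hx]).
  rewrite (CSeries_ext _ (fun n => RtoC x * E n x)%C) by (intros; apply HE2).
  rewrite CSeries_scalR, HM', Hd by auto.
  generalize (S p). intros m. induction m; cbn [csum]. ring.
  rewrite Cmult_plus_distr_l, IHm. simpl pow. rewrite RtoC_mult. ring.
Qed.

End Ident.

Lemma csum_shift f n : csum f (S n) = (f 0%nat + csum (fun k => f (S k)) n)%C.
Proof. induction n. cbn [csum]. ring. change (csum f (S (S n))) with (csum f (S n) + f (S n))%C. rewrite IHn. cbn [csum]. ring. Qed.

Lemma HasExp_CPoly q f : CPoly q f -> HasExp f (f 0) 0.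
Proof.
  intros [d Hd]. assert (E0 : f 0 = d 0%nat).
  { rewrite Hd. rewrite csum_shift. rewrite (csum_ext _ (fun _ => RtoC 0)). rewrite csum_const0.
    simpl. ring. intros k _. rewrite pow_i by lia. ring. }
  rewrite E0. pose proof (HasExp_plus _ _ _ _ _ _ (HasExp_const (d 0%nat)) (HasExp_poly0 (fun k => d (S k)) q)) as H.
  rewrite Cplus_0_r, Cplus_0_l in H.
  eapply HasExp_ext; [|exact H]. instantiate (1 := 0). intros x _. rewrite Hd, csum_shift. simpl. ring.
Qed.

Lemma coeff0_spec f c0 c1 : HasExp (fun x => f (RtoC (- x))) c0 c1 ->
  coeff0 f 0 = c0 /\ coeff0 f 1 = c1.
Proof.
  intros H. unfold coeff0.
  set (e := epsilon (inhabits (RtoC 0, RtoC 0)) (fun c : C * C => const_log_coeffs f (fst c) (snd c))).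
  assert (He : const_log_coeffs f (fst e) (snd e)).
  { apply epsilon_spec.
    exists (c0, c1). apply cl_iff. exact H. }
  apply cl_iff in He. destruct (HasExp_uniq _ _ _ _ _ He H). split; auto.
Qed.

Lemma csum_plus f g n : csum (fun k => f k + g k)%C n = (csum f n + csum g n)%C.
Proof. induction n; cbn [csum]. ring. rewrite IHn. ring. Qed.
Lemma csum_minus f g n : csum (fun k => f k - g k)%C n = (csum f n - csum g n)%C.
Proof. induction n; cbn [csum]. ring. rewrite IHn. ring. Qed.

Lemma csum_tail0 f ell N : (ell <= N)%nat -> (forall h, (ell < h <= N)%nat -> f h = RtoC 0) ->
  csum f (S N) = csum f (S ell).
Proof.
  intros Hle H. induction Hle. reflexivity.
  change (csum f (S (S m))) with (csum f (S m) + f (S m))%C.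
  rewrite IHHle. rewrite (H (S m)) by lia. ring. intros; apply H; lia.
Qed.

Lemma conv_exp_nonneg (u : nat -> R) s :
  (forall n, 0 < u n) -> (forall n, u n <= u (S n)) ->
  is_conv_exp (fun n => RtoC (u n)) s -> 0 <= s.
Proof.
  intros Hp Hm [H1 _]. destruct (Rle_lt_dec 0 s) as [|Hs]; auto. exfalso.
  specialize (H1 (s / 2) ltac:(lra)). apply ex_series_lim_0 in H1.
  apply is_lim_seq_spec in H1.
  assert (Hm0 : forall n, u 0%nat <= u n) by (induction n; [lra|eapply Rle_trans; eauto]).
  assert (Hq : 0 < Rpower (u 0%nat) (- (s / 2))) by (unfold Rpower; apply exp_pos).
  destruct (H1 (mkposreal _ Hq)) as [N HN]. specialize (HN N (le_n N)). cbn [pos] in HN.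
  rewrite Rminus_0_r, Cmod_R in HN. rewrite (Rabs_pos_eq (u N)) in HN by (apply Rlt_le, Hp).
  rewrite Rabs_pos_eq in HN by (unfold Rpower; apply Rlt_le, exp_pos).
  assert (Rpower (u 0%nat) (- (s / 2)) <= Rpower (u N) (- (s / 2))).
  { apply Rle_Rpower_l. lra. split; auto. }
  lra.
Qed.

Lemma not_sector_neg theta c y : 0 < theta < PI -> 0 < c -> 0 < y ->
  ~ in_sector theta c (RtoC (- y)).
Proof.
  intros Ht Hc Hy Hs.
  assert (E : (RtoC (- y) - RtoC c)%C = (- (y + c), 0)) by (apply injective_projections; simpl; ring).
  unfold in_sector in Hs. rewrite E in Hs. unfold Carg in Hs. cbn [fst snd] in Hs.
  revert Hs. destruct (Rlt_dec 0 (- (y + c))); [lra|]. destruct (Rlt_dec (- (y + c)) 0); [|lra].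
  destruct (Rle_dec 0 0); [|lra]. intros Hs.
  replace (0 / - (y + c)) with 0 in Hs by (field; lra). rewrite atan_0, Rplus_0_l in Hs.
  rewrite Rabs_pos_eq in Hs by (pose proof PI_RGT_0; lra). lra.
Qed.

Lemma HasExp_coeff F a b a' b' : HasExp F a b -> a = a' -> b = b' -> HasExp F a' b'.
Proof. intros H -> ->; auto. Qed.

Lemma Copp_RtoC_neg y : (- RtoC (- y))%C = RtoC y.
Proof. apply injective_projections; simpl; ring. Qed.

Lemma one_minus_neg x : (RtoC 1 - RtoC (- x))%C = RtoC (1 + x).
Proof. apply injective_projections; simpl; ring. Qed.

Lemma Small_shift g : Small g -> Small (fun x => g (1 + x)).
Proof.
  intros H eps He. destruct (H eps He) as [M HM]. exists (M - 1). intros x Hx. apply HM. lra.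
Qed.

Lemma HasExp_onepow_neg a : a < 0 -> HasExp (fun x => RtoC (Rpower (1 + x) a)) 0 0.
Proof.
  intros Ha. apply HasExp_Small. apply (Small_shift (fun x => RtoC (Rpower x a))).
  apply Small_rpow_neg; auto.
Qed.

Lemma HasExp_onepow_nat j : HasExp (fun x => RtoC ((1 + x) ^ j)) 1 0.
Proof.
  pose proof (HasExp_CPoly j _ (CPoly_onepow j)) as H.
  cbv beta in H. rewrite cpown_R, Rplus_0_r, pow1 in H.
  eapply HasExp_ext; [|exact H]. instantiate (1 := 0). intros x _. cbv beta. apply cpown_R.
Qed.

Lemma main_expansion (l : R) (S2 : nat -> C) p2 N2 (alpha2 : nat -> R) (a20 a21 : nat -> C)
  theta c (tt uu : nat -> C * C)
  (Hl : 0 < l) (Hre : forall n, 0 < fst (S2 n)) (Hmono : forall n, Cmod (S2 n) <= Cmod (S2 (S n)))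
  (Hg : is_genus S2 p2) (Htc : 0 < theta < PI) (Hc : 0 < c) (HN2 : alpha2 N2 <= 0)
  (Hexp : forall eps, 0 < eps -> exists R0, forall lam : C,
      ~ in_sector theta c lam -> R0 < Cmod lam ->
      Cmod (logGamma (- lam)%C S2
            - csum (fun h => a20 h * Defs.Cpow (- lam)%C (alpha2 h)) (Datatypes.S N2)
            - csum (fun j => a21 j * cpown (- lam)%C j * Clog (- lam)%C) (Datatypes.S p2))%C
        <= eps * Rpower (Cmod lam) (alpha2 N2))
  (Htt : forall h, HasExp (fun x => RtoC (Rpower (1 + x) (alpha2 h))) (fst (tt h)) (snd (tt h)))
  (Huu : forall j, HasExp (fun x => RtoC ((1 + x) ^ j * ln (1 + x))) (fst (uu j)) (snd (uu j))) :
  HasExp (fun x => logGamma (RtoC x) (fun n => ((RtoC l + S2 n) / RtoC l)%C))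
    (csum (fun h => a20 h * RtoC (Rpower l (alpha2 h)) * fst (tt h)) (S N2)
     + csum (fun j => a21 j * RtoC (l ^ j) * (RtoC (ln l) + fst (uu j))) (S p2)
     - logGamma (RtoC l) S2)%C
    (csum (fun h => a20 h * RtoC (Rpower l (alpha2 h)) * snd (tt h)) (S N2)
     + csum (fun j => a21 j * RtoC (l ^ j) * snd (uu j)) (S p2))%C.
Proof.
  set (hs := fun x : R => csum (fun h => a20 h * Defs.Cpow (RtoC (l * (1 + x))%R) (alpha2 h))%C (S N2)).
  set (js := fun x : R => csum (fun j => a21 j * cpown (RtoC (l * (1 + x))%R) j * Clog (RtoC (l * (1 + x))%R))%C (S p2)).
  set (Rem := fun x : R => (logGamma (RtoC (l * (1 + x))%R) S2 - hs x - js x)%C).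
  assert (Hhs : HasExp hs (csum (fun h => a20 h * RtoC (Rpower l (alpha2 h)) * fst (tt h))%C (S N2))
                          (csum (fun h => a20 h * RtoC (Rpower l (alpha2 h)) * snd (tt h))%C (S N2))).
  { pose proof (HasExp_csum (fun h x => (a20 h * RtoC (Rpower l (alpha2 h))) * RtoC (Rpower (1 + x) (alpha2 h)))%C
       (fun h => a20 h * RtoC (Rpower l (alpha2 h)) * fst (tt h))%C
       (fun h => a20 h * RtoC (Rpower l (alpha2 h)) * snd (tt h))%C (S N2)) as H.
    eapply HasExp_ext; [|apply H].
    - instantiate (1 := 0). intros x Hx. unfold hs. apply csum_ext. intros k _.
      rewrite Cpow_pos by nra. rewrite <- Rpower_mult_distr by lra. rewrite RtoC_mult. ring.
    - intros k. apply HasExp_scal. apply Htt. }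
  assert (Hjs : HasExp js (csum (fun j => a21 j * RtoC (l ^ j) * (RtoC (ln l) + fst (uu j)))%C (S p2))
                          (csum (fun j => a21 j * RtoC (l ^ j) * snd (uu j))%C (S p2))).
  { pose proof (HasExp_csum (fun j x => (a21 j * RtoC (l ^ j)) *
        (RtoC (ln l) * RtoC ((1 + x) ^ j) + RtoC ((1 + x) ^ j * ln (1 + x))))%C
       (fun j => a21 j * RtoC (l ^ j) * (RtoC (ln l) * 1 + fst (uu j)))%C
       (fun j => a21 j * RtoC (l ^ j) * (RtoC (ln l) * 0 + snd (uu j)))%C (S p2)) as H.
    eapply HasExp_coeff. eapply HasExp_ext; [|apply H].
    - instantiate (1 := 0). intros x Hx. unfold js. apply csum_ext. intros k _.
      rewrite cpown_R, Clog_pos by nra. rewrite ln_mult by lra. rewrite Rpow_mult_distr.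
      rewrite !RtoC_mult, RtoC_plus. ring.
    - intros k. apply HasExp_scal. apply HasExp_plus. apply HasExp_scal. apply HasExp_onepow_nat. apply Huu.
    - apply csum_ext. intros; ring.
    - apply csum_ext. intros; ring. }
  assert (HRem : Small Rem).
  { intros eps He. destruct (Hexp (eps / 2)) as [R0 HR0]. lra.
    exists (Rmax (R0 / l) (1 / l)). intros x Hx.
    assert (H1 : R0 / l < x) by (eapply Rle_lt_trans; [apply Rmax_l|exact Hx]).
    assert (H2 : 1 / l < x) by (eapply Rle_lt_trans; [apply Rmax_r|exact Hx]).
    assert (Hx0 : 0 < x). { assert (0 < 1 / l) by (apply Rdiv_lt_0_compat; lra). lra. }
    assert (Hly : 1 < l * (1 + x)).
    { apply Rmult_lt_compat_l with (r := l) in H2; auto. replace (l * (1 / l)) with 1 in H2 by (field; lra). nra. }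
    specialize (HR0 (RtoC (- (l * (1 + x))))).
    rewrite !Copp_RtoC_neg in HR0.
    rewrite Cmod_R, Rabs_left in HR0 by nra. rewrite Ropp_involutive in HR0.
    assert (HRp : Rpower (l * (1 + x)) (alpha2 N2) <= 1).
    { assert (0 < ln (l * (1 + x))) by (rewrite <- ln_1; apply ln_increasing; lra).
      assert (Hle : alpha2 N2 * ln (l * (1 + x)) <= 0) by nra.
      unfold Rpower. apply Rle_trans with (exp 0); [|rewrite exp_0; lra].
      destruct Hle as [Hlt|Heq]. left; apply exp_increasing; auto. rewrite Heq; lra. }
    assert (Cmod (Rem x) <= eps / 2 * Rpower (l * (1 + x)) (alpha2 N2)).
    { apply HR0. apply not_sector_neg; auto; nra.
      apply Rmult_lt_compat_l with (r := l) in H1; auto. replace (l * (R0 / l)) with R0 in H1 by (field; lra). nra. }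
    assert (0 <= Rpower (l * (1 + x)) (alpha2 N2)) by (unfold Rpower; apply Rlt_le, exp_pos).
    nra. }
  pose proof (HasExp_Dsum l S2 p2 Hl Hre Hmono Hg) as HD.
  eapply HasExp_coeff.
  eapply (HasExp_ext (fun x => (hs x + js x + Rem x) - logGamma (RtoC l) S2 + CSeries (fun n => Dn l S2 p2 n x))%C _ _ _ 0).
  - intros x Hx. rewrite (logGamma_split l S2 p2 Hl Hre Hmono Hg x) by lra. unfold Rem. ring.
  - apply HasExp_plus. apply HasExp_minus. apply HasExp_plus. apply HasExp_plus.
    exact Hhs. exact Hjs. apply HasExp_Small, HRem. apply HasExp_const. exact HD.
  - ring.
  - ring.
Qed.

Theorem mainTheorem11
  (lam1 : nat -> R) (S2 : nat -> C)
  (s1 s2 : R) (p1 p2 N1 N2 : nat)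
  (alpha1 alpha2 : nat -> R) (a10 a11 a20 a21 : nat -> C)
  (ell : nat) (K0 K2 : nat -> nat -> C)
  (Hpos : forall n, 0 < lam1 n)
  (HS1 : TR_spectral_type (fun n => RtoC (lam1 n)) s1 p1 N1 alpha1 a10 a11)
  (HS2 : TR_spectral_type S2 s2 p2 N2 alpha2 a20 a21)
  (HN1 : alpha1 N1 <= 0) (HN2 : alpha2 N2 <= 0)
  (Hord1 : alpha1 N1 < - INR p2 - 1)
  (Hord2 : - alpha2 N2 >= s1)
  (Hell1 : (ell <= N2)%nat) (Hell2 : - alpha2 ell <= s1)
  (Hell3 : forall h, (ell < h <= N2)%nat -> s1 < - alpha2 h) :
  let p0 := Z.to_nat (Int_part (s1 + s2)) in
  (forall s : C, A0 lam1 S2 p0 p2 ell alpha2 a20 a21 K0 K2 1 s = RtoC 0) /\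
  (forall s : C,
     A0 lam1 S2 p0 p2 ell alpha2 a20 a21 K0 K2 0 s =
     CSeries (fun n1 =>
       (- logGamma (RtoC (lam1 n1)) S2
        + csum (fun j => a21 j * RtoC (lam1 n1 ^ j * ln (lam1 n1))) (S p2)
        + csum (fun h => a20 h * RtoC (Rpower (lam1 n1) (alpha2 h))) (S ell))
       * Rpow_C (lam1 n1) (- s))%C).
Proof.
  intros p0.
  destruct HS2 as (Hnz2 & Hmono2 & Hconv2 & Hgen2 & Hdec2 & theta & c & Htc & Hc & Hsec & Hexp).
  destruct HS1 as (Hnz1 & Hmono1 & Hconv1 & _).
  assert (Hs1 : 0 <= s1).
  { apply (conv_exp_nonneg lam1 s1 Hpos); auto. intros n. specialize (Hmono1 n).
    rewrite !Cmod_R, !Rabs_pos_eq in Hmono1 by (apply Rlt_le, Hpos). exact Hmono1. }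
  assert (Hre : forall n, 0 < fst (S2 n)).
  { intros n. pose proof (sector_re theta c (S2 n) Htc Hc (Hsec n)). lra. }
  set (tt := fun h => epsilon (inhabits (RtoC 0, RtoC 0))
       (fun cc : C * C => HasExp (fun x => RtoC (Rpower (1 + x) (alpha2 h))) (fst cc) (snd cc))).
  assert (Htt : forall h, HasExp (fun x => RtoC (Rpower (1 + x) (alpha2 h))) (fst (tt h)) (snd (tt h))).
  { intros h. unfold tt. apply epsilon_spec. destruct (HasE_onepow (alpha2 h)) as [a [b H]].
    exists (a, b). exact H. }
  set (uu := fun j => epsilon (inhabits (RtoC 0, RtoC 0))
       (fun cc : C * C => HasExp (fun x => RtoC ((1 + x) ^ j * ln (1 + x))) (fst cc) (snd cc))).
  assert (Huu : forall j, HasExp (fun x => RtoC ((1 + x) ^ j * ln (1 + x))) (fst (uu j)) (snd (uu j))).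
  { intros j. unfold uu. apply epsilon_spec. destruct (HasE_onepow_ln j) as [a [b H]].
    exists (a, b). exact H. }
  assert (Htail : forall h, (ell < h <= N2)%nat -> fst (tt h) = RtoC 0 /\ snd (tt h) = RtoC 0).
  { intros h Hh. pose proof (Hell3 h Hh).
    destruct (HasExp_uniq _ _ _ _ _ (Htt h) (HasExp_onepow_neg (alpha2 h) ltac:(lra))). auto. }
  assert (Hpt : forall h, coeff0 (phi_tilde p0 alpha2 a20 K0 h) 0 = (a20 h * (fst (tt h) - 1))%C /\
                          coeff0 (phi_tilde p0 alpha2 a20 K0 h) 1 = (a20 h * snd (tt h))%C).
  { intros h. apply coeff0_spec.
    eapply HasExp_coeff.
    eapply (HasExp_ext (fun x => a20 h * (RtoC (Rpower (1 + x) (alpha2 h)) - 1)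
                         - csum (fun k => K0 (S k) h * RtoC (x ^ S k)) p0)%C _ _ _ 0).
    - intros x Hx. unfold phi_tilde. rewrite one_minus_neg, Cpow_pos by lra.
      rewrite Copp_RtoC_neg. f_equal. apply csum_ext. intros k _. rewrite cpown_R. reflexivity.
    - apply HasExp_minus. apply HasExp_scal. apply HasExp_minus. apply Htt. apply HasExp_const.
      apply HasExp_poly0.
    - ring.
    - ring. }
  assert (Hph : forall j, coeff0 (phi_hat p0 a21 K2 j) 0 = (a21 j * fst (uu j))%C /\
                          coeff0 (phi_hat p0 a21 K2 j) 1 = (a21 j * snd (uu j))%C).
  { intros j. apply coeff0_spec.
    eapply HasExp_coeff.
    eapply (HasExp_ext (fun x => a21 j * RtoC ((1 + x) ^ j * ln (1 + x))
                         - csum (fun k => K2 (S k) j * RtoC (x ^ S k)) p0)%C _ _ _ 0).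
    - intros x Hx. unfold phi_hat. rewrite one_minus_neg, cpown_R, Clog_pos by lra.
      rewrite Copp_RtoC_neg. rewrite RtoC_mult, Cmult_assoc. f_equal. apply csum_ext. intros k _. rewrite cpown_R. reflexivity.
    - apply HasExp_minus. apply HasExp_scal. apply Huu. apply HasExp_poly0.
    - ring.
    - ring. }
  assert (Hlg : forall n1,
    coeff0 (fun lam => logGamma (- lam)%C (Stilde lam1 S2 n1)) 0 =
      (csum (fun h => a20 h * RtoC (Rpower (lam1 n1) (alpha2 h)) * fst (tt h)) (S N2)
       + csum (fun j => a21 j * RtoC (lam1 n1 ^ j) * (RtoC (ln (lam1 n1)) + fst (uu j))) (S p2)
       - logGamma (RtoC (lam1 n1)) S2)%C /\
    coeff0 (fun lam => logGamma (- lam)%C (Stilde lam1 S2 n1)) 1 =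
      (csum (fun h => a20 h * RtoC (Rpower (lam1 n1) (alpha2 h)) * snd (tt h)) (S N2)
       + csum (fun j => a21 j * RtoC (lam1 n1 ^ j) * snd (uu j)) (S p2))%C).
  { intros n1. apply coeff0_spec.
    eapply HasExp_ext; [|apply (main_expansion (lam1 n1) S2 p2 N2 alpha2 a20 a21 theta c tt uu
                                   (Hpos n1) Hre Hmono2 Hgen2 Htc Hc HN2 Hexp Htt Huu)].
    instantiate (1 := 0). intros x _. rewrite Copp_RtoC_neg. reflexivity. }
  split.
  - intros s. unfold A0. rewrite (CSeries_ext _ (fun _ => RtoC 0)).
    + assert (Z : Series (fun _ : nat => 0) = 0).
      { transitivity (Series (fun n : nat => 0 * 1)). apply Series_ext; intros; ring.
        rewrite (Series_scal_l 0 (fun _ => 1)). ring. }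
      unfold CSeries. simpl. rewrite Z. reflexivity.
    + intros n1. destruct (Hlg n1) as [_ ->].
      rewrite (csum_ext (fun h => coeff0 (phi_tilde p0 alpha2 a20 K0 h) 1 * RtoC (Rpower (lam1 n1) (alpha2 h)))%C
                        (fun h => a20 h * RtoC (Rpower (lam1 n1) (alpha2 h)) * snd (tt h))%C)
        by (intros h _; rewrite (proj2 (Hpt h)); ring).
      rewrite (csum_ext (fun l => coeff0 (phi_hat p0 a21 K2 l) 1 * RtoC (lam1 n1 ^ l))%C
                        (fun j => a21 j * RtoC (lam1 n1 ^ j) * snd (uu j))%C)
        by (intros j _; rewrite (proj2 (Hph j)); ring).
      rewrite (csum_tail0 _ ell N2 Hell1).
      ring.
      intros h Hh. rewrite (proj2 (Htail h Hh)). ring.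
  - intros s. unfold A0. apply CSeries_ext. intros n1.
    destruct (Hlg n1) as [-> _]. f_equal.
    rewrite (csum_ext (fun h => coeff0 (phi_tilde p0 alpha2 a20 K0 h) 0 * RtoC (Rpower (lam1 n1) (alpha2 h)))%C
                      (fun h => a20 h * (fst (tt h) - 1) * RtoC (Rpower (lam1 n1) (alpha2 h)))%C)
      by (intros h _; rewrite (proj1 (Hpt h)); ring).
    rewrite (csum_ext (fun l => coeff0 (phi_hat p0 a21 K2 l) 0 * RtoC (lam1 n1 ^ l))%C
                      (fun j => a21 j * fst (uu j) * RtoC (lam1 n1 ^ j))%C)
      by (intros j _; rewrite (proj1 (Hph j)); ring).
    rewrite (csum_tail0 _ ell N2 Hell1).
    2:{ intros h Hh. rewrite (proj1 (Htail h Hh)). ring. }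
    assert (Eh : csum (fun h => a20 h * RtoC (Rpower (lam1 n1) (alpha2 h)) * fst (tt h))%C (S ell)
               = (csum (fun h => a20 h * (fst (tt h) - 1) * RtoC (Rpower (lam1 n1) (alpha2 h)))%C (S ell)
                  + csum (fun h => a20 h * RtoC (Rpower (lam1 n1) (alpha2 h)))%C (S ell))%C).
    { rewrite <- csum_plus. apply csum_ext. intros; ring. }
    assert (Ej : csum (fun j => a21 j * RtoC (lam1 n1 ^ j) * (RtoC (ln (lam1 n1)) + fst (uu j)))%C (S p2)
               = (csum (fun j => a21 j * fst (uu j) * RtoC (lam1 n1 ^ j))%C (S p2)
                  + csum (fun j => a21 j * RtoC (lam1 n1 ^ j * ln (lam1 n1)))%C (S p2))%C).
    { rewrite <- csum_plus. apply csum_ext. intros; rewrite RtoC_mult; ring. }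
    rewrite Eh, Ej. ring.
Qed.
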